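(* Let $Z=x\frac{\partial}{\partial x}+\sum_{k=1}^n\big(\mathcal{A}y+G(x,y)\big)_k\frac{\partial}{\partial y_k}$ be a polynomial vector field on $\mathbb{C}^{n+1}$, where $\mathcal{A}\in\mathfrak{gl}(n,\mathbb{C})$ and $G$ is a polynomial map whose components lie in the ideal $(y_1,\dots,y_n)^2$. Suppose there are $\delta_0,\delta_1,\epsilon>0$ with $$(-\delta_1+\epsilon)|y|^2<\operatorname{Re}\langle\mathcal{A}y,y\rangle<(-\delta_0-\epsilon)|y|^2\quad\text{for all }y\in\mathbb{C}^n\setminus\{0\}.$$ For $x_0\in\widehat{\mathbb{D}}(2)$ and $y_0\in\mathbb{C}^n$, let $w(t)=(x_0^{1-t},y(t))$ be the solution of $w'=-\log(x_0)\,Z(w)$, $w(0)=(x_0,y_0)$, and when it is defined on $[0,1]$ set $f_{x_0}(y_0)=y(1)$. Then there exist $r,c_0,c_1>0$ such that for every $x\in\widehat{\mathbb{D}}(2)$ the map $f_x$ is defined on $\{|y|<r\}$ and $$c_1|x|^{\delta_1}|u-v|\le|f_x(u)-f_x(v)|\le c_0|x|^{\delta_0}|u-v|$$ for all $x\in\widehat{\mathbb{D}}(2)$ and $|u|,|v|<r$.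
   Context: $\widehat{\mathbb{D}}(2)=\{x\in\mathbb{C}\setminus(-\infty,0]:|x|<2\}$. $\log$ is the principal determination of the logarithm and $x_0^{1-t}=\exp((1-t)\log x_0)$. $\langle\cdot,\cdot\rangle$ is the standard Hermitian inner product and $|\cdot|$ the Euclidean norm. *)

(* Defs.v *)
From Stdlib Require Import Reals List.
From Coquelicot Require Import Coquelicot.

Open Scope R_scope.

(* Vectors of C^n are represented as functions nat -> C; only the
   coordinates k < n are meaningful (all operations below only look at them). *)

Fixpoint csum (n : nat) (f : nat -> C) : C :=
  match n with O => 0%R | S m => Cplus (csum m f) (f m) end.

Fixpoint nsum (n : nat) (f : nat -> nat) : nat :=
  match n with O => O | S m => (nsum m f + f m)%nat end.

Fixpoint cprod (n : nat) (f : nat -> C) : C :=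
  match n with O => 1%R | S m => Cmult (cprod m f) (f m) end.

Definition cinner (n : nat) (u v : nat -> C) : C :=
  csum n (fun k => Cmult (u k) (Cconj (v k))).

Definition vnorm (n : nat) (v : nat -> C) : R :=
  sqrt (Re (cinner n v v)).

Definition vsub (u v : nat -> C) : nat -> C := fun k => Cminus (u k) (v k).

Definition matvec (n : nat) (A : nat -> nat -> C) (y : nat -> C) : nat -> C :=
  fun k => csum n (fun j => Cmult (A k j) (y j)).

(* A monomial c * x^a * prod_{j<n} y_j^(b j) *)
Definition monomial : Type := (C * nat * (nat -> nat))%type.

Definition eval_monomial (n : nat) (m : monomial) (x : C) (y : nat -> C) : C :=
  let '(c, a, b) := m in
  Cmult c (Cmult (pow_n x a) (cprod n (fun j => pow_n (y j) (b j)))).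

Definition polymap : Type := nat -> list monomial.

Definition eval_poly (n : nat) (G : polymap) (x : C) (y : nat -> C) : nat -> C :=
  fun k => fold_right (fun m s => Cplus (eval_monomial n m x y) s) 0%R (G k).

(* Every component of G lies in the ideal (y_1,...,y_n)^2: every monomial has
   total degree >= 2 in the y-variables. *)
Definition in_ideal_y2 (n : nat) (G : polymap) : Prop :=
  forall k m, (k < n)%nat -> In m (G k) -> (2 <= nsum n (snd m))%nat.

Definition Cexp (z : C) : C :=
  (exp (Re z) * cos (Im z), exp (Re z) * sin (Im z)).

(* principal argument, valid on C \ (-oo,0] (half-angle formula):
   Arg z = 2 atan (Im z / (|z| + Re z)) in (-pi, pi). *)
Definition Carg (z : C) : R := 2 * atan (Im z / (Cmod z + Re z)).

Definition Clog (z : C) : C := (ln (Cmod z), Carg z).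

Definition cpow_real (x0 : C) (s : R) : C := Cexp (Cmult (RtoC s) (Clog x0)).

Definition slit_disc2 (x : C) : Prop :=
  Cmod x < 2 /\ ~ (Im x = 0 /\ Re x <= 0).

(* y : R -> C^n is the y-part of a solution w(t) = (x0^(1-t), y(t)) on [0,1]
   of w' = -log(x0) Z(w), Z = x d/dx + sum_k (A y + G(x,y))_k d/dy_k,
   with w(0) = (x0, y0).  (The x-component x0^(1-t) solves x' = -log(x0) x.) *)
Definition is_flow_sol (n : nat) (A : nat -> nat -> C) (G : polymap)
    (x0 : C) (y0 : nat -> C) (y : R -> nat -> C) : Prop :=
  (forall k, (k < n)%nat -> y 0 k = y0 k) /\
  forall t, 0 <= t <= 1 -> forall k, (k < n)%nat ->
    is_derive (fun s => y s k) t
      (Cmult (Copp (Clog x0))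
         (Cplus (matvec n A (y t) k)
                (eval_poly n G (cpow_real x0 (1 - t)) (y t) k))).

(* Main.v *)
Require Import Defs.
From Stdlib Require Import Reals List Lra Lia Psatz.
From Coquelicot Require Import Coquelicot.
Open Scope R_scope.

Ltac Ceq := apply injective_projections; simpl; ring.

Fixpoint rsum (n : nat) (f : nat -> R) : R :=
  match n with O => 0 | S m => rsum m f + f m end.

Lemma rsum_ext n f g : (forall k, (k < n)%nat -> f k = g k) -> rsum n f = rsum n g.
Proof. induction n; simpl; intros H; auto. rewrite IHn by (intros; apply H; lia). rewrite H by lia. auto. Qed.

Lemma rsum_le n f g : (forall k, (k < n)%nat -> f k <= g k) -> rsum n f <= rsum n g.
Proof. induction n; simpl; intros H; [lra|]. assert (H1 := H n ltac:(lia)). assert (rsum n f <= rsum n g) by (apply IHn; intros; apply H; lia). lra. Qed.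

Lemma rsum_nonneg n f : (forall k, (k < n)%nat -> 0 <= f k) -> 0 <= rsum n f.
Proof. induction n; simpl; intros H; [lra|]. assert (H1 := H n ltac:(lia)). assert (0 <= rsum n f) by (apply IHn; intros; apply H; lia). lra. Qed.

Lemma rsum_plus n f g : rsum n (fun k => f k + g k) = rsum n f + rsum n g.
Proof. induction n; simpl; [lra|]. rewrite IHn; ring. Qed.

Lemma rsum_scal n c f : rsum n (fun k => c * f k) = c * rsum n f.
Proof. induction n; simpl; [lra|]. rewrite IHn; ring. Qed.

Lemma rsum_term n f k : (forall j, (j < n)%nat -> 0 <= f j) -> (k < n)%nat -> f k <= rsum n f.
Proof. induction n; simpl; intros Hf Hk; [lia|].
  assert (0 <= rsum n f) by (apply rsum_nonneg; intros; apply Hf; lia).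
  destruct (Nat.eq_dec k n). subst; lra.
  assert (f k <= rsum n f) by (apply IHn; [intros; apply Hf; lia| lia]).
  assert (H2 := Hf n ltac:(lia)). lra. Qed.

Lemma rsum_const_le n f c : (forall k, (k < n)%nat -> f k <= c) -> rsum n f <= INR n * c.
Proof. induction n; cbn [rsum]; intros H; [simpl; lra|]. assert (rsum n f <= INR n * c) by (apply IHn; intros; apply H; lia).
  assert (H1 := H n ltac:(lia)). rewrite S_INR. lra. Qed.

Lemma re_csum n f : Re (csum n f) = rsum n (fun k => Re (f k)).
Proof. induction n; cbn [csum]; auto. rewrite re_plus, IHn; auto. Qed.
Lemma im_csum n f : Im (csum n f) = rsum n (fun k => Im (f k)).
Proof. induction n; cbn [csum]; auto. rewrite im_plus, IHn; auto. Qed.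

Lemma Cmod_csum n f : Cmod (csum n f) <= rsum n (fun k => Cmod (f k)).
Proof. induction n; simpl. rewrite Cmod_0; lra.
  eapply Rle_trans. apply Cmod_triangle. lra. Qed.

Lemma csum_ext n f g : (forall k, (k < n)%nat -> f k = g k) -> csum n f = csum n g.
Proof. induction n; simpl; intros H; auto. rewrite IHn by (intros; apply H; lia). rewrite H by lia. auto. Qed.

Lemma csum_scal n c f : csum n (fun k => Cmult c (f k)) = Cmult c (csum n f).
Proof. induction n; simpl. Ceq. rewrite IHn. Ceq. Qed.

Lemma csum_plus n f g : csum n (fun k => Cplus (f k) (g k)) = Cplus (csum n f) (csum n g).
Proof. induction n; simpl. Ceq. rewrite IHn. Ceq. Qed.

Definition Qn n (v : nat -> C) := rsum n (fun k => Cmod (v k) ^ 2).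
Definition Sn n (v : nat -> C) := rsum n (fun k => Cmod (v k)).

Lemma Qn_nonneg n v : 0 <= Qn n v.
Proof. apply rsum_nonneg; intros. apply pow2_ge_0. Qed.
Lemma Sn_nonneg n v : 0 <= Sn n v.
Proof. apply rsum_nonneg; intros. apply Cmod_ge_0. Qed.

Lemma re_cinner_self n v : Re (cinner n v v) = Qn n v.
Proof. unfold cinner, Qn. rewrite re_csum. apply rsum_ext; intros.
  rewrite Cmod2_alt. destruct (v k); simpl; ring. Qed.

Lemma vnorm_Q n v : vnorm n v = sqrt (Qn n v).
Proof. unfold vnorm; rewrite re_cinner_self; auto. Qed.

Lemma vnorm_sq n v : vnorm n v ^ 2 = Qn n v.
Proof. rewrite vnorm_Q. rewrite pow2_sqrt; auto. apply Qn_nonneg. Qed.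

Lemma vnorm_nonneg n v : 0 <= vnorm n v.
Proof. rewrite vnorm_Q; apply sqrt_pos. Qed.

Lemma Cmod_le_vnorm n v k : (k < n)%nat -> Cmod (v k) <= vnorm n v.
Proof. intros Hk. rewrite vnorm_Q. rewrite <- (sqrt_pow2 (Cmod (v k))) by apply Cmod_ge_0.
  apply sqrt_le_1_alt. unfold Qn. apply (rsum_term n (fun k => Cmod (v k) ^ 2)); auto.
  intros; apply pow2_ge_0. Qed.

Lemma Qn_le_Sn2 n v : Qn n v <= Sn n v ^ 2.
Proof. unfold Qn, Sn. induction n; simpl; [lra|].
  assert (0 <= rsum n (fun k => Cmod (v k))) by (apply rsum_nonneg; intros; apply Cmod_ge_0).
  assert (0 <= Cmod (v n)) by apply Cmod_ge_0. simpl in IHn. nra. Qed.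

Lemma vnorm_le_Sn n v : vnorm n v <= Sn n v.
Proof. rewrite vnorm_Q. rewrite <- (sqrt_pow2 (Sn n v)) by apply Sn_nonneg.
  apply sqrt_le_1_alt. apply Qn_le_Sn2. Qed.

Lemma Sn_le_vnorm n v : Sn n v <= INR n * vnorm n v.
Proof. apply rsum_const_le. intros; apply Cmod_le_vnorm; auto. Qed.

Lemma Qn_zero n v : Qn n v = 0 -> forall k, (k < n)%nat -> v k = 0%C.
Proof. intros H k Hk. apply Cmod_eq_0. assert (Cmod (v k) ^ 2 <= Qn n v).
  { apply (rsum_term n (fun k => Cmod (v k) ^ 2)); auto. intros; apply pow2_ge_0. }
  assert (0 <= Cmod (v k)) by apply Cmod_ge_0. nra. Qed.

Lemma Cmod_cinner n u v : Cmod (cinner n u v) <= Sn n u * vnorm n v.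
Proof. unfold cinner. eapply Rle_trans. apply Cmod_csum. unfold Sn. rewrite Rmult_comm, <- rsum_scal.
  apply rsum_le; intros. rewrite Cmod_mult, Cmod_conj. rewrite Rmult_comm.
  apply Rmult_le_compat_r. apply Cmod_ge_0. apply Cmod_le_vnorm; auto. Qed.

Lemma pow_n_S (x : C) a : pow_n x (S a) = Cmult x (pow_n x a).
Proof. reflexivity. Qed.
Lemma pow_n_O (x : C) : pow_n x O = RtoC 1.
Proof. reflexivity. Qed.

Lemma Cmod_pow_n (x : C) a : Cmod (pow_n x a) = Cmod x ^ a.
Proof. induction a. rewrite pow_n_O. simpl. apply Cmod_1.
  rewrite pow_n_S, Cmod_mult, IHa. simpl; ring. Qed.

Lemma Cmod_minus_sym (x y : C) : Cmod (Cminus x y) = Cmod (Cminus y x).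
Proof. rewrite <- Cmod_opp. f_equal. Ceq. Qed.

Lemma powdiff (x y : C) rho a : Cmod x <= rho -> Cmod y <= rho ->
  rho * Cmod (Cminus (pow_n x a) (pow_n y a)) <= INR a * rho ^ a * Cmod (Cminus x y).
Proof. intros Hx Hy. assert (0 <= rho) by (pose proof (Cmod_ge_0 x); lra).
  induction a.
  - rewrite !pow_n_O. replace (Cminus 1 1) with (RtoC 0) by Ceq. rewrite Cmod_0. simpl. lra.
  - rewrite !pow_n_S.
    replace (Cminus (Cmult x (pow_n x a)) (Cmult y (pow_n y a))) with
      (Cplus (Cmult x (Cminus (pow_n x a) (pow_n y a))) (Cmult (Cminus x y) (pow_n y a))) by Ceq.
    eapply Rle_trans. apply Rmult_le_compat_l; [lra|apply Cmod_triangle].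
    rewrite !Cmod_mult, Cmod_pow_n.
    assert (0 <= Cmod x) by apply Cmod_ge_0. assert (0 <= Cmod y) by apply Cmod_ge_0.
    assert (0 <= Cmod (Cminus x y)) by apply Cmod_ge_0.
    assert (0 <= Cmod (Cminus (pow_n x a) (pow_n y a))) by apply Cmod_ge_0.
    assert (Cmod y ^ a <= rho ^ a) by (apply pow_incr; lra).
    assert (0 <= Cmod y ^ a) by (apply pow_le; lra).
    assert (0 <= rho ^ a) by (apply pow_le; lra).
    rewrite S_INR. simpl.
    assert (Cmod x * (rho * Cmod (Cminus (pow_n x a) (pow_n y a))) <= rho * (INR a * rho ^ a * Cmod (Cminus x y))).
    { apply Rmult_le_compat; try nra. }
    assert (0 <= INR a) by apply pos_INR.
    assert (Cmod x * (INR a * rho ^ a * Cmod (Cminus x y)) <= rho * (INR a * rho ^ a * Cmod (Cminus x y))).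
    { apply Rmult_le_compat_r; auto. apply Rmult_le_pos; [apply Rmult_le_pos|]; auto. }
    assert (rho * Cmod (Cminus x y) * Cmod y ^ a <= rho * Cmod (Cminus x y) * rho ^ a).
    { apply Rmult_le_compat_l; auto. apply Rmult_le_pos; auto. }
    nra.
Qed.

Lemma Cmod_cprod_pow n (u : nat -> C) b rho : 0 <= rho ->
  (forall j, (j < n)%nat -> Cmod (u j) <= rho) ->
  Cmod (cprod n (fun j => pow_n (u j) (b j))) <= rho ^ (nsum n b).
Proof. intros Hr. induction n; intros Hu; simpl. rewrite Cmod_1; lra.
  rewrite Cmod_mult, Cmod_pow_n, pow_add. apply Rmult_le_compat.
  apply Cmod_ge_0. apply pow_le, Cmod_ge_0. apply IHn; intros; apply Hu; lia.
  apply pow_incr. split. apply Cmod_ge_0. apply Hu; lia. Qed.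

Lemma cprod_diff n (u v : nat -> C) b rho D :
  (forall j, (j < n)%nat -> Cmod (u j) <= rho) ->
  (forall j, (j < n)%nat -> Cmod (v j) <= rho) ->
  (forall j, (j < n)%nat -> Cmod (Cminus (u j) (v j)) <= D) ->
  rho * Cmod (Cminus (cprod n (fun j => pow_n (u j) (b j))) (cprod n (fun j => pow_n (v j) (b j))))
   <= INR (nsum n b) * rho ^ (nsum n b) * D.
Proof. intros Hu Hv HD. induction n; simpl.
  - replace (Cminus 1 1) with (RtoC 0) by Ceq. rewrite Cmod_0. lra.
  - assert (Hu' : forall j, (j < n)%nat -> Cmod (u j) <= rho) by (intros; apply Hu; lia).
    assert (Hv' : forall j, (j < n)%nat -> Cmod (v j) <= rho) by (intros; apply Hv; lia).
    assert (HD' : forall j, (j < n)%nat -> Cmod (Cminus (u j) (v j)) <= D) by (intros; apply HD; lia).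
    specialize (IHn Hu' Hv' HD').
    assert (0 <= rho) by (pose proof (Cmod_ge_0 (u n)); pose proof (Hu n ltac:(lia)); lra).
    set (P := cprod n (fun j => pow_n (u j) (b j))) in *.
    set (P' := cprod n (fun j => pow_n (v j) (b j))) in *.
    replace (Cminus (Cmult P (pow_n (u n) (b n))) (Cmult P' (pow_n (v n) (b n)))) with
      (Cplus (Cmult P (Cminus (pow_n (u n) (b n)) (pow_n (v n) (b n)))) (Cmult (Cminus P P') (pow_n (v n) (b n)))) by Ceq.
    eapply Rle_trans. apply Rmult_le_compat_l; [lra|apply Cmod_triangle].
    rewrite !Cmod_mult, Cmod_pow_n.
    assert (HP : Cmod P <= rho ^ nsum n b) by (apply Cmod_cprod_pow; auto).
    assert (Hpw := powdiff (u n) (v n) rho (b n) (Hu n ltac:(lia)) (Hv n ltac:(lia))).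
    assert (HDn := HD n ltac:(lia)).
    assert (0 <= Cmod P) by apply Cmod_ge_0.
    assert (0 <= Cmod (Cminus P P')) by apply Cmod_ge_0.
    assert (0 <= Cmod (Cminus (u n) (v n))) by apply Cmod_ge_0.
    assert (0 <= Cmod (Cminus (pow_n (u n) (b n)) (pow_n (v n) (b n)))) by apply Cmod_ge_0.
    assert (Cmod (v n) ^ b n <= rho ^ b n) by (apply pow_incr; split; [apply Cmod_ge_0| apply Hv; lia]).
    assert (0 <= Cmod (v n) ^ b n) by (apply pow_le, Cmod_ge_0).
    assert (0 <= rho ^ b n) by (apply pow_le; lra).
    assert (0 <= rho ^ nsum n b) by (apply pow_le; lra).
    assert (0 <= INR (b n)) by apply pos_INR. assert (0 <= INR (nsum n b)) by apply pos_INR.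
    rewrite plus_INR, pow_add.
    assert (0 <= D) by (pose proof (Cmod_ge_0 (Cminus (u n) (v n))); lra).
    assert (A1 : Cmod P * (rho * Cmod (Cminus (pow_n (u n) (b n)) (pow_n (v n) (b n)))) <=
                 rho ^ nsum n b * (INR (b n) * rho ^ b n * D)).
    { apply Rmult_le_compat; try nra. eapply Rle_trans. apply Hpw. apply Rmult_le_compat_l; nra. }
    assert (A2 : (rho * Cmod (Cminus P P')) * Cmod (v n) ^ b n <= (INR (nsum n b) * rho ^ nsum n b * D) * rho ^ b n).
    { apply Rmult_le_compat; try nra. }
    nra.
Qed.

Definition mterm n rho (m : monomial) : R :=
  let '(c, a, b) := m in Cmod c * 2 ^ a * INR (nsum n b) * rho ^ (nsum n b).
Definition PC n rho (l : list monomial) : R := fold_right (fun m s => mterm n rho m + s) 0 l.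
Definition xterm (m : monomial) : R :=
  let '(c, a, b) := m in Cmod c * INR a * 2 ^ a.
Definition PX (l : list monomial) : R := fold_right (fun m s => xterm m + s) 0 l.

Definition evl n (l : list monomial) x y : C :=
  fold_right (fun m s => Cplus (eval_monomial n m x y) s) (RtoC 0) l.

Lemma eval_poly_evl n G x y k : eval_poly n G x y k = evl n (G k) x y.
Proof. reflexivity. Qed.

Lemma mterm_nonneg n rho m : 0 <= rho -> 0 <= mterm n rho m.
Proof. destruct m as [[c a] b]; simpl; intros.
  repeat apply Rmult_le_pos; try apply Cmod_ge_0; try apply pow_le; try lra; apply pos_INR. Qed.
Lemma PC_nonneg n rho l : 0 <= rho -> 0 <= PC n rho l.
Proof. induction l; simpl; intros; [lra|]. pose proof (mterm_nonneg n rho a H). specialize (IHl H). lra. Qed.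
Lemma xterm_nonneg m : 0 <= xterm m.
Proof. destruct m as [[c a] b]; simpl.
  repeat apply Rmult_le_pos; try apply Cmod_ge_0; try apply pow_le; try lra; apply pos_INR. Qed.
Lemma PX_nonneg l : 0 <= PX l.
Proof. induction l; simpl; [lra|]. pose proof (xterm_nonneg a). lra. Qed.

Lemma mono_diff_y n m x u v rho : 0 <= rho -> Cmod x <= 2 ->
  (forall j, (j < n)%nat -> Cmod (u j) <= rho) ->
  (forall j, (j < n)%nat -> Cmod (v j) <= rho) ->
  rho * Cmod (Cminus (eval_monomial n m x u) (eval_monomial n m x v)) <= mterm n rho m * vnorm n (vsub u v).
Proof. intros Hr Hx Hu Hv. destruct m as [[c a] b]. unfold eval_monomial, mterm.
  replace (Cminus (Cmult c (Cmult (pow_n x a) (cprod n (fun j => pow_n (u j) (b j)))))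
       (Cmult c (Cmult (pow_n x a) (cprod n (fun j => pow_n (v j) (b j))))))
    with (Cmult c (Cmult (pow_n x a) (Cminus (cprod n (fun j => pow_n (u j) (b j))) (cprod n (fun j => pow_n (v j) (b j)))))) by Ceq.
  rewrite !Cmod_mult, Cmod_pow_n.
  assert (H := cprod_diff n u v b rho (vnorm n (vsub u v)) Hu Hv ltac:(intros j Hj; apply (Cmod_le_vnorm n (vsub u v) j Hj))).
  assert (0 <= Cmod c) by apply Cmod_ge_0. assert (0 <= Cmod x) by apply Cmod_ge_0.
  assert (Cmod x ^ a <= 2 ^ a) by (apply pow_incr; lra).
  assert (0 <= Cmod x ^ a) by (apply pow_le; lra).
  set (D := Cmod (Cminus _ _)) in *. assert (0 <= D) by apply Cmod_ge_0.
  assert (0 <= rho * D) by (apply Rmult_le_pos; auto).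
  replace (rho * (Cmod c * (Cmod x ^ a * D))) with (Cmod c * (Cmod x ^ a * (rho * D))) by ring.
  replace (Cmod c * 2 ^ a * INR (nsum n b) * rho ^ nsum n b * vnorm n (vsub u v)) with
    (Cmod c * (2 ^ a * (INR (nsum n b) * rho ^ nsum n b * vnorm n (vsub u v)))) by ring.
  apply Rmult_le_compat_l; auto. apply Rmult_le_compat; auto. Qed.

Lemma evl_diff_y n l x u v rho : 0 <= rho -> Cmod x <= 2 ->
  (forall j, (j < n)%nat -> Cmod (u j) <= rho) ->
  (forall j, (j < n)%nat -> Cmod (v j) <= rho) ->
  rho * Cmod (Cminus (evl n l x u) (evl n l x v)) <= PC n rho l * vnorm n (vsub u v).
Proof. intros Hr Hx Hu Hv. induction l; simpl.
  - replace (Cminus 0 0) with (RtoC 0) by Ceq. rewrite Cmod_0. pose proof (vnorm_nonneg n (vsub u v)). lra.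
  - replace (Cminus (Cplus (eval_monomial n a x u) (evl n l x u)) (Cplus (eval_monomial n a x v) (evl n l x v)))
      with (Cplus (Cminus (eval_monomial n a x u) (eval_monomial n a x v)) (Cminus (evl n l x u) (evl n l x v))) by Ceq.
    eapply Rle_trans. apply Rmult_le_compat_l; [lra|apply Cmod_triangle].
    pose proof (mono_diff_y n a x u v rho Hr Hx Hu Hv). lra.
Qed.

Lemma G_diff n G x u v rho : 0 <= rho -> Cmod x <= 2 -> vnorm n u <= rho -> vnorm n v <= rho ->
  rho * Sn n (vsub (eval_poly n G x u) (eval_poly n G x v)) <= rsum n (fun k => PC n rho (G k)) * vnorm n (vsub u v).
Proof. intros Hr Hx Hu Hv. unfold Sn. rewrite <- rsum_scal. rewrite Rmult_comm, <- rsum_scal.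
  apply rsum_le; intros k Hk. unfold vsub at 1. rewrite !eval_poly_evl.
  rewrite (Rmult_comm (vnorm _ _)). apply evl_diff_y; auto.
  intros j Hj; eapply Rle_trans; [apply Cmod_le_vnorm; eauto| auto].
  intros j Hj; eapply Rle_trans; [apply Cmod_le_vnorm; eauto| auto]. Qed.

Lemma PC_small n rho l : 0 <= rho <= 1 -> (forall m, In m l -> (2 <= nsum n (snd m))%nat) ->
  PC n rho l <= rho ^ 2 * PC n 1 l.
Proof. intros Hr Hl. induction l; simpl. lra.
  assert (IH : PC n rho l <= rho ^ 2 * PC n 1 l) by (apply IHl; intros; apply Hl; simpl; auto).
  assert (mterm n rho a <= rho ^ 2 * mterm n 1 a).
  { destruct a as [[c a] b]. simpl. assert (H2 := Hl (c,a,b) (or_introl eq_refl)). simpl in H2.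
    replace (nsum n b) with (2 + (nsum n b - 2))%nat by lia. rewrite pow_add, pow1.
    assert (0 <= rho ^ (nsum n b - 2)) by (apply pow_le; lra).
    assert (rho ^ (nsum n b - 2) <= 1) by (rewrite <- (pow1 (nsum n b - 2)); apply pow_incr; lra).
    assert (0 <= Cmod c * 2 ^ a * INR (2 + (nsum n b - 2))).
    { repeat apply Rmult_le_pos; try apply Cmod_ge_0; try apply pow_le; try lra; apply pos_INR. }
    assert (0 <= rho^2) by apply pow2_ge_0.
    set (K := Cmod c * 2 ^ a * INR (2 + (nsum n b - 2))) in *.
    set (e := rho ^ (nsum n b - 2)) in *.
    replace (K * (rho ^ 2 * e)) with (rho^2 * (K * e)) by ring.
    replace (K * (1 * 1)) with K by ring.
    apply Rmult_le_compat_l; auto. assert (K * e <= K * 1) by (apply Rmult_le_compat_l; auto). lra. }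
  simpl. lra. Qed.

Lemma evl_diff_x n l x x' w : Cmod x <= 2 -> Cmod x' <= 2 -> (forall j, (j < n)%nat -> Cmod (w j) <= 1) ->
  Cmod (Cminus (evl n l x w) (evl n l x' w)) <= PX l * Cmod (Cminus x x').
Proof. intros Hx Hx' Hw. induction l; simpl.
  - replace (Cminus 0 0) with (RtoC 0) by Ceq. rewrite Cmod_0. pose proof (Cmod_ge_0 (Cminus x x')). lra.
  - replace (Cminus (Cplus (eval_monomial n a x w) (evl n l x w)) (Cplus (eval_monomial n a x' w) (evl n l x' w)))
      with (Cplus (Cminus (eval_monomial n a x w) (eval_monomial n a x' w)) (Cminus (evl n l x w) (evl n l x' w))) by Ceq.
    eapply Rle_trans. apply Cmod_triangle.
    assert (Cmod (Cminus (eval_monomial n a x w) (eval_monomial n a x' w)) <= xterm a * Cmod (Cminus x x')).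
    { destruct a as [[c a] b]. unfold eval_monomial, xterm.
      replace (Cminus (Cmult c (Cmult (pow_n x a) (cprod n (fun j => pow_n (w j) (b j)))))
         (Cmult c (Cmult (pow_n x' a) (cprod n (fun j => pow_n (w j) (b j))))))
      with (Cmult c (Cmult (Cminus (pow_n x a) (pow_n x' a)) (cprod n (fun j => pow_n (w j) (b j))))) by Ceq.
      rewrite !Cmod_mult.
      assert (Hp := Cmod_cprod_pow n w b 1 ltac:(lra) Hw). rewrite pow1 in Hp.
      assert (Hd := powdiff x x' 2 a Hx Hx').
      assert (0 <= Cmod c) by apply Cmod_ge_0.
      assert (0 <= Cmod (cprod n (fun j => pow_n (w j) (b j)))) by apply Cmod_ge_0.
      assert (0 <= Cmod (Cminus (pow_n x a) (pow_n x' a))) by apply Cmod_ge_0.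
      assert (0 <= INR a * 2 ^ a * Cmod (Cminus x x')).
      { repeat apply Rmult_le_pos; try apply Cmod_ge_0; try apply pow_le; try lra; apply pos_INR. }
      assert (Cmod (Cminus (pow_n x a) (pow_n x' a)) * Cmod (cprod n (fun j => pow_n (w j) (b j))) <= INR a * 2 ^ a * Cmod (Cminus x x')).
      { eapply Rle_trans. apply Rmult_le_compat_l; [auto| apply Hp]. lra. }
      replace (Cmod c * INR a * 2 ^ a * Cmod (Cminus x x')) with (Cmod c * (INR a * 2 ^ a * Cmod (Cminus x x'))) by ring.
      apply Rmult_le_compat_l; auto. }
    lra.
Qed.

Lemma cprod_zero n b : (1 <= nsum n b)%nat -> cprod n (fun j => pow_n (RtoC 0) (b j)) = RtoC 0.
Proof. induction n; simpl; intros H. lia.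
  destruct (b n) eqn:E.
  - rewrite Nat.add_0_r in H. rewrite IHn by auto. Ceq.
  - rewrite pow_n_S. Ceq. Qed.

Lemma evl_zero n l x : (forall m, In m l -> (2 <= nsum n (snd m))%nat) ->
  evl n l x (fun _ => RtoC 0) = RtoC 0.
Proof. induction l; simpl; intros H; auto.
  rewrite IHl by (intros; apply H; auto). destruct a as [[c a0] b]. unfold eval_monomial.
  rewrite cprod_zero. Ceq. specialize (H (c,a0,b) (or_introl eq_refl)). simpl in H. lia. Qed.

Lemma core_real l m Q W Iw gr gi KA eps d0 d1 :
  0 <= Q -> -l < 1 -> Rabs m <= PI -> 0 < d0 -> 0 < d1 -> 0 < eps -> 0 <= KA ->
  Rabs W <= KA * Q -> Rabs Iw <= KA * Q -> Rabs gr <= eps * Q -> Rabs gi <= eps * Q ->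
  (0 < Q -> (-d1 + eps) * Q < W /\ W < (-d0 - eps) * Q) ->
  l * (W + gr) - m * (Iw + gi) <= (- l * d0 + (d1 + PI * KA + PI * eps)) * Q /\
  (- l * d1 - (d1 + PI * KA + PI * eps)) * Q <= l * (W + gr) - m * (Iw + gi).
Proof.
  intros HQ Hl Hm Hd0 Hd1 He HKA HW HI Hgr Hgi HA.
  assert (HPI : 0 < PI) by apply PI_RGT_0.
  assert (Hmi : - (m * (Iw + gi)) <= PI * (KA + eps) * Q /\ - (PI * (KA + eps) * Q) <= - (m * (Iw + gi))).
  { assert (Rabs (Iw + gi) <= (KA + eps) * Q) by (eapply Rle_trans; [apply Rabs_triang|]; lra).
    assert (Rabs (m * (Iw + gi)) <= PI * ((KA + eps) * Q)).
    { rewrite Rabs_mult. apply Rmult_le_compat; auto; apply Rabs_pos. }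
    split; apply Rabs_le_between' in H0 || idtac; revert H0; unfold Rabs; destruct Rcase_abs; intros; nra. }
  destruct (Req_dec Q 0) as [HQ0|HQ0].
  - subst Q. assert (W = 0) by (revert HW; unfold Rabs; destruct Rcase_abs; intros; nra).
    assert (gr = 0) by (revert Hgr; unfold Rabs; destruct Rcase_abs; intros; nra).
    subst. lra.
  - assert (HQp : 0 < Q) by lra. destruct (HA HQp) as [HW1 HW2].
    assert (Hg : - (eps * Q) <= gr <= eps * Q) by (revert Hgr; unfold Rabs; destruct Rcase_abs; intros; lra).
    destruct (Rle_lt_dec 0 l) as [Hl0|Hl0].
    + split; nra.
    + split; nra.
Qed.

Lemma is_derive_C_fst (f : R -> C) t (l : C) :
  is_derive f t l -> is_derive (fun s => fst (f s)) t (fst l).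
Proof. intros H. unfold is_derive in *.
  apply (@filterdiff_comp R_AbsRing R_NormedModule C_R_NormedModule R_NormedModule _ _ f (fun z : C_R_NormedModule => fst z) (fun y => scal y l) (fun z : C_R_NormedModule => fst z) H).
  apply filterdiff_linear. apply (@is_linear_fst R_AbsRing R_NormedModule R_NormedModule). Qed.

Lemma is_derive_C_snd (f : R -> C) t (l : C) :
  is_derive f t l -> is_derive (fun s => snd (f s)) t (snd l).
Proof. intros H. unfold is_derive in *.
  apply (@filterdiff_comp R_AbsRing R_NormedModule C_R_NormedModule R_NormedModule _ _ f (fun z : C_R_NormedModule => snd z) (fun y => scal y l) (fun z : C_R_NormedModule => snd z) H).
  apply filterdiff_linear. apply (@is_linear_snd R_AbsRing R_NormedModule R_NormedModule). Qed.

Lemma is_derive_C_pair (f g : R -> R) t a b :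
  is_derive f t a -> is_derive g t b -> is_derive (fun s => (f s, g s) : C) t ((a, b) : C).
Proof. intros Hf Hg. unfold is_derive in *.
  apply (@filterdiff_comp'_2 R_AbsRing R_NormedModule R_NormedModule R_NormedModule C_R_NormedModule f g (fun u v => (u, v) : C_R_NormedModule) t (fun y => scal y a) (fun y => scal y b) (fun u v => (u,v) : C_R_NormedModule) Hf Hg).
  apply filterdiff_linear. 
  apply (@is_linear_ext _ _ _ (fun t => t)). intros [u v]; reflexivity. apply is_linear_id.
Qed.

Lemma is_derive_rsum n (f : R -> nat -> R) t (df : nat -> R) :
  (forall k, (k < n)%nat -> is_derive (fun s => f s k) t (df k)) ->
  is_derive (fun s => rsum n (f s)) t (rsum n df).
Proof. induction n; intros H; simpl.
  - apply (is_derive_const 0).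
  - apply (@is_derive_plus R_AbsRing R_NormedModule). apply IHn; intros; apply H; lia. apply H; lia. Qed.

Lemma is_derive_val (f : R -> R) t l l' : is_derive f t l -> l = l' -> is_derive f t l'.
Proof. intros H ->; auto. Qed.

Lemma is_derive_sq (f : R -> R) t a : is_derive f t a -> is_derive (fun s => f s ^ 2) t (2 * a * f t).
Proof. intros H. eapply is_derive_val. apply (is_derive_pow f 2 t a H). simpl; ring. Qed.

Lemma is_derive_Qn n (y : R -> nat -> C) (Y : nat -> C) t :
  (forall k, (k < n)%nat -> is_derive (fun s => y s k) t (Y k)) ->
  is_derive (fun s => Qn n (y s)) t (2 * Re (cinner n Y (y t))).
Proof. intros H. unfold Qn, cinner. rewrite re_csum, <- rsum_scal.
  apply is_derive_rsum. intros k Hk.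
  apply (is_derive_ext (fun s => fst (y s k) ^ 2 + snd (y s k) ^ 2)).
  { intros s. rewrite Cmod2_alt. reflexivity. }
  eapply is_derive_val.
  apply (@is_derive_plus R_AbsRing R_NormedModule); apply is_derive_sq.
  apply (is_derive_C_fst (fun s => y s k)); auto. apply (is_derive_C_snd (fun s => y s k)); auto.
  destruct (Y k), (y t k). simpl. unfold plus; simpl. ring. Qed.

Lemma is_derive_contpt (f : R -> R) t l : is_derive f t l -> continuity_pt f t.
Proof. intros H. apply continuity_pt_filterlim. apply (ex_derive_continuous f t). exists l; auto. Qed.

Lemma gronwall (f df : R -> R) kap :
  (forall t, 0 <= t <= 1 -> is_derive f t (df t)) ->
  (forall t, 0 <= t <= 1 -> df t <= 2 * kap * f t) ->
  forall t, 0 <= t <= 1 -> f t <= exp (2 * kap * t) * f 0.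
Proof. intros Hd Hle t Ht.
  set (h := fun s => exp (- (2 * kap) * s) * f s).
  assert (Hh : forall s, 0 <= s <= 1 -> is_derive h s (exp (- (2 * kap) * s) * (df s - 2 * kap * f s))).
  { intros s Hs. unfold h. eapply is_derive_val.
    apply (@is_derive_mult R_AbsRing). 2: apply Hd; auto.
    apply (is_derive_comp exp (fun s => - (2*kap) * s)). apply is_derive_exp.
    eapply is_derive_val. apply is_derive_scal. apply (is_derive_id s). simpl. reflexivity.
    intros; apply Rmult_comm.
    unfold plus, mult, scal; simpl. unfold mult, plus; simpl. unfold one; simpl; ring. }
  destruct (MVT_gen h 0 t (fun s => exp (- (2 * kap) * s) * (df s - 2 * kap * f s))) as [c [Hc Heq]].
  { intros s Hs. rewrite Rmin_left in Hs by lra. rewrite Rmax_right in Hs by lra. apply Hh; lra. }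
  { intros s Hs. rewrite Rmin_left in Hs by lra. rewrite Rmax_right in Hs by lra. eapply is_derive_contpt, Hh; lra. }
  rewrite Rmin_left in Hc by lra. rewrite Rmax_right in Hc by lra.
  assert (exp (- (2 * kap) * c) * (df c - 2 * kap * f c) <= 0).
  { assert (0 < exp (- (2 * kap) * c)) by apply exp_pos. assert (df c <= 2 * kap * f c) by (apply Hle; lra). nra. }
  assert (h t <= h 0) by nra. unfold h in H0. rewrite Rmult_0_r, exp_0, Rmult_1_l in H0.
  assert (exp (2 * kap * t) * exp (- (2 * kap) * t) = 1).
  { rewrite <- exp_plus. replace (2 * kap * t + - (2 * kap) * t) with 0 by ring. apply exp_0. }
  assert (0 < exp (2 * kap * t)) by apply exp_pos.
  replace (f t) with (exp (2 * kap * t) * (exp (- (2 * kap) * t) * f t)) by (rewrite <- Rmult_assoc, H1; ring).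
  apply Rmult_le_compat_l; lra. Qed.

Definition KA n (A : nat -> nat -> C) := rsum n (fun k => rsum n (fun j => Cmod (A k j))).

Lemma KA_nonneg n A : 0 <= KA n A.
Proof. apply rsum_nonneg; intros; apply rsum_nonneg; intros; apply Cmod_ge_0. Qed.

Lemma Sn_matvec n A v : Sn n (matvec n A v) <= KA n A * vnorm n v.
Proof. unfold Sn, KA. rewrite Rmult_comm, <- rsum_scal. apply rsum_le; intros k Hk.
  unfold matvec. eapply Rle_trans. apply Cmod_csum. rewrite <- rsum_scal. apply rsum_le; intros j Hj.
  rewrite Cmod_mult. rewrite Rmult_comm. apply Rmult_le_compat_r. apply Cmod_ge_0. apply Cmod_le_vnorm; auto. Qed.

Lemma Cmod_cinner_Av n A d : Cmod (cinner n (matvec n A d) d) <= KA n A * Qn n d.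
Proof. eapply Rle_trans. apply Cmod_cinner. rewrite <- vnorm_sq.
  pose proof (Sn_matvec n A d). pose proof (vnorm_nonneg n d). simpl. nra. Qed.

Lemma matvec_sub n A u v k : matvec n A (vsub u v) k = Cminus (matvec n A u k) (matvec n A v k).
Proof. unfold matvec, vsub. induction n; simpl. Ceq. rewrite IHn. Ceq. Qed.

Lemma cinner_lam n lam a b d :
  cinner n (fun k => Cmult lam (Cplus (a k) (b k))) d = Cmult lam (Cplus (cinner n a d) (cinner n b d)).
Proof. unfold cinner. rewrite <- csum_plus, <- csum_scal. apply csum_ext; intros. Ceq. Qed.

Lemma im_le_Cmod c : Rabs (Im c) <= Cmod c.
Proof. pose proof (Rmax_Cmod c). eapply Rle_trans; [|apply H]. apply Rmax_r. Qed.

Definition lamx (x : C) : C := Copp (Clog x).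

Lemma Carg_bound z : Rabs (Carg z) <= PI.
Proof. unfold Carg. pose proof (atan_bound (Im z / (Cmod z + Re z))). unfold Rabs; destruct Rcase_abs; lra. Qed.

Lemma lam_re x : Re (lamx x) = - ln (Cmod x).
Proof. reflexivity. Qed.
Lemma lam_im x : Im (lamx x) = - Carg x.
Proof. reflexivity. Qed.

Lemma ln2_lt_1 : ln 2 < 1.
Proof. rewrite <- ln_exp with 1. apply ln_increasing. lra.
  pose proof (exp_ineq1 1 ltac:(lra)). lra. Qed.

Lemma slit_pos x : slit_disc2 x -> 0 < Cmod x.
Proof. intros [H1 H2]. apply Cmod_gt_0. intros ->. apply H2. simpl; lra. Qed.

Lemma slit_ln x : slit_disc2 x -> ln (Cmod x) < 1.
Proof. intros Hx. pose proof (slit_pos x Hx). destruct Hx as [H1 _].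
  eapply Rlt_trans. apply ln_increasing; eauto. apply ln2_lt_1. Qed.

Section Core.
Variables (n : nat) (A : nat -> nat -> C) (delta0 delta1 eps : R).
Hypotheses (Hd0 : 0 < delta0) (Hd1 : 0 < delta1) (He : 0 < eps).
Hypothesis (HA : forall y : nat -> C, vnorm n y <> 0 ->
     (- delta1 + eps) * (vnorm n y) ^ 2 < Re (cinner n (matvec n A y) y) /\
     Re (cinner n (matvec n A y) y) < (- delta0 - eps) * (vnorm n y) ^ 2).

Definition cst := delta1 + PI * KA n A + PI * eps.

Lemma energy_core x d g : slit_disc2 x ->
  Cmod (cinner n g d) <= eps * Qn n d ->
  Re (cinner n (fun k => Cmult (lamx x) (Cplus (matvec n A d k) (g k))) d) <= (ln (Cmod x) * delta0 + cst) * Qn n d /\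
  (ln (Cmod x) * delta1 - cst) * Qn n d <= Re (cinner n (fun k => Cmult (lamx x) (Cplus (matvec n A d k) (g k))) d).
Proof. intros Hx Hg. rewrite cinner_lam. rewrite re_mult, re_plus, im_plus, lam_re, lam_im.
  set (w := cinner n (matvec n A d) d). set (gi := cinner n g d).
  assert (Hw := Cmod_cinner_Av n A d). fold w in Hw.
  assert (HQ := Qn_nonneg n d).
  destruct (core_real (- ln (Cmod x)) (- Carg x) (Qn n d) (Re w) (Im w) (Re gi) (Im gi) (KA n A) eps delta0 delta1)
    as [H1 H2]; auto.
  - rewrite Ropp_involutive. apply slit_ln; auto.
  - rewrite Rabs_Ropp. apply Carg_bound.
  - apply KA_nonneg.
  - eapply Rle_trans; [apply re_le_Cmod| auto].
  - eapply Rle_trans; [apply im_le_Cmod| auto].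
  - eapply Rle_trans; [apply re_le_Cmod| auto].
  - eapply Rle_trans; [apply im_le_Cmod| auto].
  - intros HQp. assert (Hv : vnorm n d <> 0).
    { rewrite vnorm_Q. intros H0. apply sqrt_eq_0 in H0; lra. }
    destruct (HA d Hv) as [A1 A2]. rewrite vnorm_sq in A1, A2. split; auto.
  - unfold cst. split.
    + eapply Rle_trans; [|eapply Rle_trans; [apply H1|]]. right; ring. right; ring.
    + eapply Rle_trans; [|eapply Rle_trans; [apply H2|]]. right; ring. right; ring.
Qed.
End Core.

Definition clamp (t : R) := Rmax 0 (Rmin 1 t).
Lemma clamp_bound t : 0 <= clamp t <= 1.
Proof. unfold clamp, Rmax, Rmin. repeat destruct Rle_dec; lra. Qed.
Lemma clamp_id t : 0 <= t <= 1 -> clamp t = t.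
Proof. unfold clamp, Rmax, Rmin. repeat destruct Rle_dec; lra. Qed.
Lemma clamp_lip t s : Rabs (clamp t - clamp s) <= Rabs (t - s).
Proof. unfold clamp, Rmax, Rmin, Rabs. repeat destruct Rle_dec; repeat destruct Rcase_abs; lra. Qed.
Lemma clamp_cont t : continuity_pt clamp t.
Proof. intros e He. exists e. split; auto. intros s [_ Hs]. unfold R_dist in *. simpl in *. unfold R_dist in *.
  eapply Rle_lt_trans. apply clamp_lip. auto. Qed.

Definition Xt (x : C) (t : R) : C := cpow_real x (1 - clamp t).

Lemma Cmod_Cexp z : Cmod (Cexp z) = exp (Re z).
Proof. unfold Cexp, Cmod. cbn [fst snd].
  replace ((exp (Re z) * cos (Im z)) ^ 2 + (exp (Re z) * sin (Im z)) ^ 2) with (exp (Re z) ^ 2)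
    by (pose proof (sin2_cos2 (Im z)); unfold Rsqr in *; simpl; nra).
  apply sqrt_pow2. left; apply exp_pos. Qed.

Lemma Xt_bound x t : slit_disc2 x -> Cmod (Xt x t) <= 2.
Proof. intros Hx. unfold Xt, cpow_real. rewrite Cmod_Cexp. simpl.
  pose proof (clamp_bound t). pose proof (slit_pos x Hx). destruct Hx as [H2 _].
  assert (ln (Cmod x) < ln 2) by (apply ln_increasing; auto).
  replace ((1 - clamp t) * ln (Cmod x) - 0 * Carg x) with ((1 - clamp t) * ln (Cmod x)) by ring.
  rewrite <- (exp_ln 2) by lra.
  assert (Hle : (1 - clamp t) * ln (Cmod x) <= ln 2).
  { destruct (Rle_lt_dec 0 (ln (Cmod x))). assert (0 < ln 2) by (rewrite <- ln_1; apply ln_increasing; lra). nra.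
    assert (0 < ln 2) by (rewrite <- ln_1; apply ln_increasing; lra). nra. }
  destruct Hle as [Hlt|Heq]. left; apply exp_increasing; auto. rewrite Heq; lra. Qed.

Lemma smooth_cont (f : R -> R) t : ex_derive f t -> continuity_pt f t.
Proof. intros H. apply continuity_pt_filterlim. apply (ex_derive_continuous (V := R_NormedModule) f t H). Qed.

Lemma contpt_ext (f g : R -> R) t : (forall s, f s = g s) -> continuity_pt f t -> continuity_pt g t.
Proof. intros H Hf. apply continuity_pt_filterlim. apply continuity_pt_filterlim in Hf.
  rewrite <- H. eapply filterlim_ext; eauto. Qed.

Lemma Xt_fst_cont x t : continuity_pt (fun s => fst (Xt x s)) t.
Proof. apply (contpt_ext (comp (fun th => exp ((1 - th) * ln (Cmod x) - 0 * Carg x) * cos ((1 - th) * Carg x + 0 * ln (Cmod x))) clamp)).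
  { intros s. unfold comp, Xt, cpow_real, Cexp. simpl. reflexivity. }
  apply continuity_pt_comp. apply clamp_cont. apply smooth_cont. auto_derive. auto. Qed.

Lemma Xt_snd_cont x t : continuity_pt (fun s => snd (Xt x s)) t.
Proof. apply (contpt_ext (comp (fun th => exp ((1 - th) * ln (Cmod x) - 0 * Carg x) * sin ((1 - th) * Carg x + 0 * ln (Cmod x))) clamp)).
  { intros s. unfold comp, Xt, cpow_real, Cexp. simpl. reflexivity. }
  apply continuity_pt_comp. apply clamp_cont. apply smooth_cont. auto_derive. auto. Qed.

Lemma Cmod_le_sum (c : C) : Cmod c <= Rabs (fst c) + Rabs (snd c).
Proof. unfold Cmod. rewrite <- (sqrt_pow2 (Rabs (fst c) + Rabs (snd c))) by (pose proof (Rabs_pos (fst c)); pose proof (Rabs_pos (snd c)); lra).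
  apply sqrt_le_1_alt. pose proof (Rabs_pos (fst c)); pose proof (Rabs_pos (snd c)).
  pose proof (pow2_abs (fst c)); pose proof (pow2_abs (snd c)). nra. Qed.

Lemma Xt_cont x t : forall e, 0 < e -> exists d, 0 < d /\ forall s, Rabs (s - t) < d -> Cmod (Cminus (Xt x s) (Xt x t)) < e.
Proof. intros e He.
  destruct (Xt_fst_cont x t (e/2) ltac:(lra)) as [d1 [Hd1 H1]].
  destruct (Xt_snd_cont x t (e/2) ltac:(lra)) as [d2 [Hd2 H2]].
  exists (Rmin d1 d2). split. apply Rmin_pos; auto. intros s Hs.
  eapply Rle_lt_trans. apply Cmod_le_sum.
  assert (A1 : Rabs (fst (Xt x s) - fst (Xt x t)) < e/2).
  { destruct (Req_dec s t). subst. rewrite Rminus_diag, Rabs_R0; lra.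
    apply (H1 s). split. split. exact I. auto. simpl. unfold R_dist. pose proof (Rmin_l d1 d2). lra. }
  assert (A2 : Rabs (snd (Xt x s) - snd (Xt x t)) < e/2).
  { destruct (Req_dec s t). subst. rewrite Rminus_diag, Rabs_R0; lra.
    apply (H2 s). split. split. exact I. auto. simpl. unfold R_dist. pose proof (Rmin_r d1 d2). lra. }
  simpl. replace (fst (Xt x s) + - fst (Xt x t)) with (fst (Xt x s) - fst (Xt x t)) by ring.
  change (Rabs (fst (Xt x s) - fst (Xt x t)) + Rabs (snd (Xt x s) - snd (Xt x t)) < e). lra. Qed.

Lemma Sn_ext n u v : (forall k, (k < n)%nat -> u k = v k) -> Sn n u = Sn n v.
Proof. intros H; unfold Sn; apply rsum_ext; intros; rewrite H; auto. Qed.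
Lemma Qn_ext n u v : (forall k, (k < n)%nat -> u k = v k) -> Qn n u = Qn n v.
Proof. intros H; unfold Qn; apply rsum_ext; intros; rewrite H; auto. Qed.
Lemma vnorm_ext n u v : (forall k, (k < n)%nat -> u k = v k) -> vnorm n u = vnorm n v.
Proof. intros H; rewrite !vnorm_Q; rewrite (Qn_ext n u v H); auto. Qed.

Lemma Sn_scal n c z : Sn n (fun k => Cmult (RtoC c) (z k)) = Rabs c * Sn n z.
Proof. unfold Sn. rewrite <- rsum_scal. apply rsum_ext; intros. rewrite Cmod_mult, Cmod_R. auto. Qed.

Lemma Sn_sub_sym n u v : Sn n (vsub u v) = Sn n (vsub v u).
Proof. unfold Sn, vsub. apply rsum_ext; intros. apply Cmod_minus_sym. Qed.

Lemma Sn_rev n u v : Sn n u - Sn n v <= Sn n (vsub u v).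
Proof. unfold Sn, vsub. rewrite <- (Rplus_0_l (rsum n (fun k => Cmod (Cminus (u k) (v k))))).
  replace (rsum n (fun k => Cmod (u k)) - rsum n (fun k => Cmod (v k))) with
    (rsum n (fun k => Cmod (u k) - Cmod (v k))).
  2:{ unfold Rminus. rewrite rsum_plus. f_equal.
      replace (- rsum n (fun k => Cmod (v k))) with (-1 * rsum n (fun k => Cmod (v k))) by ring.
      rewrite <- rsum_scal. apply rsum_ext; intros; ring. }
  rewrite Rplus_0_l. apply rsum_le; intros.
  replace (u k) with (Cplus (Cminus (u k) (v k)) (v k)) at 1 by Ceq.
  pose proof (Cmod_triangle (Cminus (u k) (v k)) (v k)). lra. Qed.

Lemma Sn_scal_diff n s t z w : 0 <= s ->
  Sn n (vsub (fun k => Cmult (RtoC s) (z k)) (fun k => Cmult (RtoC t) (w k))) <= s * Sn n (vsub z w) + Rabs (s - t) * Sn n w.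
Proof. intros Hs. unfold Sn, vsub. rewrite <- !rsum_scal, <- rsum_plus. apply rsum_le; intros.
  replace (Cminus (Cmult s (z k)) (Cmult t (w k))) with (Cplus (Cmult s (Cminus (z k) (w k))) (Cmult (RtoC (s - t)) (w k))) by Ceq.
  eapply Rle_trans. apply Cmod_triangle. rewrite !Cmod_mult, !Cmod_R. rewrite (Rabs_right s) by lra. lra. Qed.

Lemma Sn_nonneg' n v : 0 <= Sn n v. Proof. apply Sn_nonneg. Qed.

Section Retract.
Variable n : nat.
Variable rho : R.
Hypothesis Hrho : 0 < rho.

Definition sig (z : nat -> C) : R := if Rle_dec (Sn n z) rho then 1 else rho / Sn n z.
Definition Pr (z : nat -> C) : nat -> C := fun k => Cmult (RtoC (sig z)) (z k).

Lemma sig_bound z : 0 < sig z <= 1.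
Proof. unfold sig. destruct Rle_dec. lra. split. apply Rdiv_lt_0_compat; lra.
  apply Rmult_le_reg_r with (Sn n z). lra. unfold Rdiv. rewrite Rmult_assoc, Rinv_l; lra. Qed.

Lemma Sn_Pr z : Sn n (Pr z) <= rho.
Proof. unfold Pr. rewrite Sn_scal. pose proof (sig_bound z). rewrite Rabs_right by lra. unfold sig in *.
  destruct Rle_dec. lra. unfold Rdiv. rewrite Rmult_assoc, Rinv_l; lra. Qed.

Lemma vnorm_Pr z : vnorm n (Pr z) <= rho.
Proof. eapply Rle_trans. apply vnorm_le_Sn. apply Sn_Pr. Qed.

Lemma Pr_id z : Sn n z <= rho -> forall k, Pr z k = z k.
Proof. intros H k. unfold Pr, sig. destruct Rle_dec; [|lra]. Ceq. Qed.

Lemma Pr_lip z w : Sn n (vsub (Pr z) (Pr w)) <= 2 * Sn n (vsub z w).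
Proof. unfold Pr. eapply Rle_trans. apply Sn_scal_diff. pose proof (sig_bound z); lra.
  pose proof (Sn_rev n z w). pose proof (Sn_rev n w z). rewrite Sn_sub_sym in H0.
  pose proof (Sn_nonneg n (vsub z w)). pose proof (sig_bound z). pose proof (sig_bound w).
  unfold sig in *. destruct (Rle_dec (Sn n z) rho); destruct (Rle_dec (Sn n w) rho).
  - rewrite Rminus_diag, Rabs_R0. lra.
  - assert (0 < Sn n w) by lra.
    assert (E : Rabs (1 - rho / Sn n w) * Sn n w = Sn n w - rho).
    { rewrite Rabs_right. field. lra. apply Rge_minus. apply Rle_ge.
      apply Rmult_le_reg_r with (Sn n w). lra. unfold Rdiv. rewrite Rmult_assoc, Rinv_l; lra. }
    lra.
  - assert (0 < Sn n z) by lra.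
    assert (Hs : rho / Sn n z <= 1) by (apply Rmult_le_reg_r with (Sn n z); [lra|]; unfold Rdiv; rewrite Rmult_assoc, Rinv_l; lra).
    assert (E : Rabs (rho / Sn n z - 1) = 1 - rho / Sn n z) by (rewrite Rabs_left1; [ring| lra]).
    rewrite E. assert ((1 - rho / Sn n z) * Sn n w <= (1 - rho / Sn n z) * Sn n z).
    { apply Rmult_le_compat_l; lra. }
    assert ((1 - rho / Sn n z) * Sn n z = Sn n z - rho) by (field; lra).
    assert (rho / Sn n z * Sn n (vsub z w) <= 1 * Sn n (vsub z w)) by (apply Rmult_le_compat_r; lra).
    lra.
  - assert (0 < Sn n z) by lra. assert (0 < Sn n w) by lra.
    assert (Hs : rho / Sn n z <= 1) by (apply Rmult_le_reg_r with (Sn n z); [lra|]; unfold Rdiv; rewrite Rmult_assoc, Rinv_l; lra).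
    assert (Hs0 : 0 <= rho / Sn n z) by (left; apply Rdiv_lt_0_compat; lra).
    assert (E : Rabs (rho / Sn n z - rho / Sn n w) * Sn n w = rho / Sn n z * Rabs (Sn n w - Sn n z)).
    { replace (rho / Sn n z - rho / Sn n w) with (rho / Sn n z * ((Sn n w - Sn n z) / Sn n w)) by (field; lra).
      rewrite Rabs_mult, (Rabs_right (rho / Sn n z)) by lra. unfold Rdiv. rewrite Rabs_mult.
      rewrite (Rabs_right (/ Sn n w)) by (apply Rle_ge; left; apply Rinv_0_lt_compat; lra).
      field. lra. }
    rewrite E. assert (Rabs (Sn n w - Sn n z) <= Sn n (vsub z w)) by (unfold Rabs; destruct Rcase_abs; lra).
    assert (rho / Sn n z * Rabs (Sn n w - Sn n z) <= rho / Sn n z * Sn n (vsub z w)) by (apply Rmult_le_compat_l; lra).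
    assert (rho / Sn n z * Sn n (vsub z w) <= 1 * Sn n (vsub z w)) by (apply Rmult_le_compat_r; lra).
    lra.
Qed.
End Retract.

Lemma lin_helper n c a b a' b' :
  Sn n (vsub (fun k => Cmult c (Cplus (a k) (b k))) (fun k => Cmult c (Cplus (a' k) (b' k))))
  <= Cmod c * (Sn n (vsub a a') + Sn n (vsub b b')).
Proof. unfold Sn, vsub. rewrite <- rsum_plus, <- rsum_scal. apply rsum_le; intros.
  replace (Cminus (Cmult c (Cplus (a k) (b k))) (Cmult c (Cplus (a' k) (b' k)))) with
    (Cmult c (Cplus (Cminus (a k) (a' k)) (Cminus (b k) (b' k)))) by Ceq.
  rewrite Cmod_mult. apply Rmult_le_compat_l. apply Cmod_ge_0. apply Cmod_triangle. Qed.

Lemma cprod_ext n b (y y' : nat -> C) : (forall j, (j < n)%nat -> y j = y' j) ->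
  cprod n (fun j => pow_n (y j) (b j)) = cprod n (fun j => pow_n (y' j) (b j)).
Proof. induction n; simpl; intros H; auto. rewrite IHn by (intros; apply H; lia). rewrite H by lia. auto. Qed.

Lemma evl_ext n l x y y' : (forall j, (j < n)%nat -> y j = y' j) -> evl n l x y = evl n l x y'.
Proof. intros H. induction l; simpl; auto. rewrite IHl. f_equal. destruct a as [[c a] b]. unfold eval_monomial.
  rewrite (cprod_ext n b y y' H). auto. Qed.

Lemma matvec_ext n A y y' : (forall j, (j < n)%nat -> y j = y' j) -> forall k, matvec n A y k = matvec n A y' k.
Proof. intros H k. unfold matvec. apply csum_ext. intros; rewrite H; auto. Qed.

Lemma matvec_zero n A k : matvec n A (fun _ => RtoC 0) k = RtoC 0.
Proof. unfold matvec. induction n; simpl. auto. rewrite IHn. Ceq. Qed.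

Lemma Sn_zero_sub n v : Sn n (vsub v (fun _ => RtoC 0)) = Sn n v.
Proof. apply Sn_ext; intros. unfold vsub. f_equal. Ceq. Qed.
Lemma vnorm_zero_sub n v : vnorm n (vsub v (fun _ => RtoC 0)) = vnorm n v.
Proof. apply vnorm_ext; intros. unfold vsub. Ceq. Qed.

Lemma Sn_const0 m : Sn m (fun _ => RtoC 0) = 0.
Proof. unfold Sn; induction m; simpl; auto. rewrite IHm, Cmod_0. lra. Qed.

Section Field.
Variables (n : nat) (A : nat -> nat -> C) (G : polymap) (x : C) (rho : R).
Hypotheses (HG : in_ideal_y2 n G) (Hx : slit_disc2 x) (Hrho : 0 < rho) (Hrho1 : rho <= 1).

Definition Fm (t : R) (z : nat -> C) : nat -> C := fun k =>
  Cmult (lamx x) (Cplus (matvec n A (Pr n rho z) k) (eval_poly n G (Xt x t) (Pr n rho z) k)).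

Definition CGr := rsum n (fun k => PC n rho (G k)) / rho.
Definition Mc := Cmod (lamx x) * (KA n A + CGr).
Definition Lc := 2 * Mc.
Definition Bc := Mc * rho.
Definition PXs := rsum n (fun k => PX (G k)).

Lemma CGr_nonneg : 0 <= CGr.
Proof. unfold CGr. apply Rmult_le_pos. apply rsum_nonneg; intros; apply PC_nonneg; lra.
  left; apply Rinv_0_lt_compat; auto. Qed.
Lemma Mc_nonneg : 0 <= Mc.
Proof. unfold Mc. apply Rmult_le_pos. apply Cmod_ge_0. pose proof (KA_nonneg n A); pose proof CGr_nonneg; lra. Qed.
Lemma PXs_nonneg : 0 <= PXs.
Proof. apply rsum_nonneg; intros; apply PX_nonneg. Qed.

Lemma G_Lip_rho t u v : vnorm n u <= rho -> vnorm n v <= rho ->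
  Sn n (vsub (eval_poly n G (Xt x t) u) (eval_poly n G (Xt x t) v)) <= CGr * vnorm n (vsub u v).
Proof. intros Hu Hv. pose proof (G_diff n G (Xt x t) u v rho ltac:(lra) (Xt_bound x t Hx) Hu Hv).
  unfold CGr. apply Rmult_le_reg_l with rho; auto. eapply Rle_trans; [apply H|]. right. field. lra. Qed.

Lemma Fm_diffP t z w : Sn n (vsub (Fm t z) (Fm t w)) <= Mc * Sn n (vsub (Pr n rho z) (Pr n rho w)).
Proof. unfold Fm. eapply Rle_trans. apply lin_helper. unfold Mc.
  rewrite Rmult_assoc. apply Rmult_le_compat_l. apply Cmod_ge_0.
  assert (H1 : Sn n (vsub (matvec n A (Pr n rho z)) (matvec n A (Pr n rho w))) <= KA n A * Sn n (vsub (Pr n rho z) (Pr n rho w))).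
  { rewrite (Sn_ext n _ (matvec n A (vsub (Pr n rho z) (Pr n rho w)))).
    eapply Rle_trans. apply Sn_matvec. apply Rmult_le_compat_l. apply KA_nonneg. apply vnorm_le_Sn.
    intros; rewrite matvec_sub; unfold vsub; auto. }
  assert (H2 : Sn n (vsub (eval_poly n G (Xt x t) (Pr n rho z)) (eval_poly n G (Xt x t) (Pr n rho w))) <= CGr * Sn n (vsub (Pr n rho z) (Pr n rho w))).
  { eapply Rle_trans. apply G_Lip_rho; apply vnorm_Pr; auto. apply Rmult_le_compat_l. apply CGr_nonneg. apply vnorm_le_Sn. }
  lra. Qed.

Lemma Fm_lip t z w : Sn n (vsub (Fm t z) (Fm t w)) <= Lc * Sn n (vsub z w).
Proof. eapply Rle_trans. apply Fm_diffP. unfold Lc. pose proof Mc_nonneg. pose proof (Pr_lip n rho Hrho z w).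
  replace (2 * Mc * Sn n (vsub z w)) with (Mc * (2 * Sn n (vsub z w))) by ring. apply Rmult_le_compat_l; auto. Qed.

Lemma Fm_zero t k : (k < n)%nat -> Fm t (fun _ => RtoC 0) k = RtoC 0.
Proof. intros Hk. unfold Fm.
  assert (HP : forall j, Pr n rho (fun _ => RtoC 0) j = RtoC 0) by (intros; unfold Pr; Ceq).
  rewrite (matvec_ext n A _ _ (fun j _ => HP j)), matvec_zero.
  rewrite eval_poly_evl, (evl_ext n (G k) (Xt x t) _ (fun _ => RtoC 0) (fun j _ => HP j)).
  rewrite evl_zero. Ceq. intros m Hm. apply (HG k m Hk Hm). Qed.

Lemma Fm_bound t z : Sn n (Fm t z) <= Bc.
Proof. rewrite <- (Sn_ext n (vsub (Fm t z) (Fm t (fun _ => RtoC 0)))).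
  2:{ intros k Hk. unfold vsub. rewrite Fm_zero by auto. Ceq. }
  eapply Rle_trans. apply Fm_diffP. unfold Bc. apply Rmult_le_compat_l. apply Mc_nonneg.
  rewrite (Sn_ext n _ (Pr n rho z)). apply Sn_Pr; auto.
  intros k Hk. unfold vsub, Pr. Ceq. Qed.

Lemma Fm_tcont t s z : Sn n (vsub (Fm t z) (Fm s z)) <= Cmod (lamx x) * PXs * Cmod (Cminus (Xt x t) (Xt x s)).
Proof. unfold Fm. eapply Rle_trans. apply lin_helper. rewrite Rmult_assoc. apply Rmult_le_compat_l. apply Cmod_ge_0.
  rewrite (Sn_ext n (vsub _ _) (fun _ => RtoC 0)). 2:{ intros; unfold vsub; Ceq. }
  rewrite Sn_const0, Rplus_0_l. unfold Sn, PXs. rewrite Rmult_comm, <- rsum_scal. apply rsum_le; intros k Hk.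
  unfold vsub. rewrite !eval_poly_evl. rewrite Rmult_comm. apply evl_diff_x. apply Xt_bound; auto. apply Xt_bound; auto.
  intros j Hj. eapply Rle_trans. apply Cmod_le_vnorm; eauto. pose proof (vnorm_Pr n rho Hrho z). lra. Qed.

End Field.

Definition ccont (f : R -> R) := forall t, continuous f t.

Lemma ccont_exRInt f a b : ccont f -> ex_RInt f a b.
Proof. intros H. apply (@ex_RInt_continuous R_CompleteNormedModule). intros; apply H. Qed.

Lemma int_lip (f : R -> R) B : ccont f -> (forall s, Rabs (f s) <= B) ->
  forall s t, Rabs (RInt f 0 s - RInt f 0 t) <= B * Rabs (s - t).
Proof. intros Hc Hb s t.
  assert (E : RInt f 0 s - RInt f 0 t = RInt f t s).
  { rewrite <- (RInt_Chasles f 0 t s) by (apply ccont_exRInt; auto). unfold plus; simpl. ring. }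
  rewrite E. destruct (Rle_lt_dec t s).
  - rewrite (Rabs_right (s - t)) by lra. rewrite Rmult_comm. apply abs_RInt_le_const; auto. apply ccont_exRInt; auto.
  - rewrite <- opp_RInt_swap by (apply ccont_exRInt; auto). unfold opp; simpl. rewrite Rabs_Ropp.
    rewrite (Rabs_left (s - t)) by lra. replace (- (s - t)) with (t - s) by ring. rewrite Rmult_comm.
    apply abs_RInt_le_const; [lra| |auto]. apply ccont_exRInt; auto. Qed.

Lemma int_deriv (f : R -> R) (c : R) t : ccont f -> is_derive (fun s => c + RInt f 0 s) t (f t).
Proof. intros Hc. eapply is_derive_val. apply (@is_derive_plus R_AbsRing R_NormedModule).
  apply is_derive_const. apply (is_derive_RInt f (RInt f 0) 0 t). 
  apply filter_forall. intros b. apply (@RInt_correct R_CompleteNormedModule). apply ccont_exRInt; auto. apply Hc.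
  unfold plus, zero; simpl; ring. Qed.

Lemma Sn_tri n a b c : Sn n (vsub a c) <= Sn n (vsub a b) + Sn n (vsub b c).
Proof. unfold Sn, vsub. rewrite <- rsum_plus. apply rsum_le; intros.
  replace (Cminus (a k) (c k)) with (Cplus (Cminus (a k) (b k)) (Cminus (b k) (c k))) by Ceq. apply Cmod_triangle. Qed.

Lemma Cmod_le_Sn n v k : (k < n)%nat -> Cmod (v k) <= Sn n v.
Proof. intros; unfold Sn. apply (rsum_term n (fun k => Cmod (v k))); auto. intros; apply Cmod_ge_0. Qed.

Lemma contpt_of_eps (f : R -> R) t : (forall e, 0 < e -> exists d, 0 < d /\ forall s, Rabs (s - t) < d -> Rabs (f s - f t) < e) ->
  continuous f t.
Proof. intros H. apply continuity_pt_filterlim. intros e He. destruct (H e He) as [d [Hd Hs]].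
  exists d; split; auto. intros s [_ Hst]. apply Hs. exact Hst. Qed.

Section Picard.
Variables (n : nat) (A : nat -> nat -> C) (G : polymap) (x : C) (rho : R) (u : nat -> C).
Hypotheses (HG : in_ideal_y2 n G) (Hx : slit_disc2 x) (Hrho : 0 < rho) (Hrho1 : rho <= 1).

Notation F := (Fm n A G x rho).

Fixpoint Zp (m : nat) (t : R) : nat -> C :=
  match m with
  | O => u
  | S m' => fun k => Cplus (u k) (RInt (fun s => fst (F s (Zp m' s) k)) 0 t, RInt (fun s => snd (F s (Zp m' s) k)) 0 t)
  end.

Definition Scont (z : R -> nat -> C) := forall t e, 0 < e -> exists d, 0 < d /\ forall s, Rabs (s - t) < d -> Sn n (vsub (z s) (z t)) < e.

Lemma F_comp_cont z : Scont z -> forall t e, 0 < e -> exists d, 0 < d /\ forall s, Rabs (s - t) < d ->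
   Sn n (vsub (F s (z s)) (F t (z t))) < e.
Proof. intros Hz t e He.
  set (L := Lc n A G x rho). set (K := Cmod (lamx x) * PXs n G).
  assert (HL : 0 <= L) by (unfold L, Lc; pose proof (Mc_nonneg n A G x rho Hrho); lra).
  assert (HK : 0 <= K) by (unfold K; apply Rmult_le_pos; [apply Cmod_ge_0| apply PXs_nonneg]).
  destruct (Hz t (e / (2 * (L + 1))) ltac:(apply Rdiv_lt_0_compat; lra)) as [d1 [Hd1 H1]].
  destruct (Xt_cont x t (e / (2 * (K + 1))) ltac:(apply Rdiv_lt_0_compat; lra)) as [d2 [Hd2 H2]].
  exists (Rmin d1 d2). split. apply Rmin_pos; auto. intros s Hs.
  eapply Rle_lt_trans. apply (Sn_tri n _ (F s (z t))).
  assert (A1 : Sn n (vsub (F s (z s)) (F s (z t))) <= L * (e / (2 * (L + 1)))).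
  { eapply Rle_trans. apply Fm_lip; auto. apply Rmult_le_compat_l; auto. left; apply H1. pose proof (Rmin_l d1 d2); lra. }
  assert (A2 : Sn n (vsub (F s (z t)) (F t (z t))) <= K * (e / (2 * (K + 1)))).
  { eapply Rle_trans. apply Fm_tcont; auto. apply Rmult_le_compat_l; auto. left; apply H2. pose proof (Rmin_r d1 d2); lra. }
  assert (L * (e / (2 * (L + 1))) < e / 2).
  { apply Rmult_lt_reg_r with (2 * (L + 1)). lra. field_simplify; try lra; try nra. }
  assert (K * (e / (2 * (K + 1))) < e / 2).
  { apply Rmult_lt_reg_r with (2 * (K + 1)). lra. field_simplify; try lra; try nra. }
  lra. Qed.

Lemma integrand_cont z k : Scont z -> (k < n)%nat ->
  ccont (fun s => fst (F s (z s) k)) /\ ccont (fun s => snd (F s (z s) k)).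
Proof. intros Hz Hk. split; intros t; apply contpt_of_eps; intros e He;
  destruct (F_comp_cont z Hz t e He) as [d [Hd H]]; exists d; split; auto; intros s Hs;
  (eapply Rle_lt_trans; [| apply (H s Hs)]); (eapply Rle_trans; [| apply (Cmod_le_Sn n _ k Hk)]); unfold vsub.
  - apply (re_le_Cmod (Cminus (F s (z s) k) (F t (z t) k))).
  - apply (im_le_Cmod (Cminus (F s (z s) k) (F t (z t) k))). Qed.

Lemma Zp_cont m : Scont (Zp m).
Proof. induction m.
  - intros t e He. exists 1. split; [lra|]. intros s _. simpl. rewrite (Sn_ext n _ (fun _ => RtoC 0)).
    rewrite Sn_const0; auto. intros; unfold vsub; Ceq.
  - intros t e He.
    set (B := Bc n A G x rho).
    assert (HB : 0 <= B) by (unfold B, Bc; apply Rmult_le_pos; [apply Mc_nonneg|]; lra).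
    exists (e / (2 * INR n * B + 1)). split. apply Rdiv_lt_0_compat; auto. pose proof (pos_INR n). nra.
    intros s Hs.
    assert (Hb : forall k, (k < n)%nat -> Cmod (Cminus (Zp (S m) s k) (Zp (S m) t k)) <= 2 * B * Rabs (s - t)).
    { intros k Hk. destruct (integrand_cont (Zp m) k IHm Hk) as [C1 C2].
      set (f1 := fun s0 => fst (F s0 (Zp m s0) k)) in *.
      set (f2 := fun s0 => snd (F s0 (Zp m s0) k)) in *.
      assert (Bd : forall s0, Cmod (F s0 (Zp m s0) k) <= B) by (intros; eapply Rle_trans; [apply (Cmod_le_Sn n _ k Hk)| apply Fm_bound; auto]).
      pose proof (int_lip f1 B C1 (fun s0 => Rle_trans _ _ _ (re_le_Cmod _) (Bd s0)) s t).
      pose proof (int_lip f2 B C2 (fun s0 => Rle_trans _ _ _ (im_le_Cmod _) (Bd s0)) s t).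
      eapply Rle_trans. apply Cmod_le_sum.
      change (Rabs ((fst (u k) + RInt f1 0 s) - (fst (u k) + RInt f1 0 t)) + Rabs ((snd (u k) + RInt f2 0 s) - (snd (u k) + RInt f2 0 t)) <= 2 * B * Rabs (s - t)).
      replace ((fst (u k) + RInt f1 0 s) - (fst (u k) + RInt f1 0 t)) with (RInt f1 0 s - RInt f1 0 t) by ring.
      replace ((snd (u k) + RInt f2 0 s) - (snd (u k) + RInt f2 0 t)) with (RInt f2 0 s - RInt f2 0 t) by ring.
      lra. }
    unfold Sn. eapply Rle_lt_trans. apply (rsum_const_le n _ (2 * B * Rabs (s - t))). exact Hb.
    pose proof (pos_INR n). pose proof (Rabs_pos (s - t)).
    assert (INR n * (2 * B * Rabs (s - t)) <= (2 * INR n * B + 1) * Rabs (s - t) - Rabs (s - t)) by nra.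
    assert ((2 * INR n * B + 1) * Rabs (s - t) < e).
    { apply Rmult_lt_reg_r with (/ (2 * INR n * B + 1)). apply Rinv_0_lt_compat; nra.
      rewrite Rmult_comm, <- Rmult_assoc, Rinv_l, Rmult_1_l by nra. exact Hs. }
    lra.
Qed.
End Picard.

Lemma int_exp_bound (h : R -> R) C K t : ccont h -> 0 < K -> 0 <= C ->
  (forall s, Rabs (h s) <= C * exp (2 * K * Rabs s)) -> Rabs (RInt h 0 t) <= C * exp (2 * K * Rabs t) / (2 * K).
Proof. intros Hc HK HC Hb. destruct (Rle_lt_dec 0 t) as [Ht|Ht].
  - assert (Hg : is_RInt (fun s => C * exp (2 * K * s)) 0 t (minus (C * exp (2 * K * t) / (2 * K)) (C * exp (2 * K * 0) / (2 * K)))).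
    { apply (is_RInt_derive (V := R_CompleteNormedModule) (fun s => C * exp (2 * K * s) / (2 * K))).
      - intros s _. auto_derive. auto. field. lra.
      - intros s _. apply (ex_derive_continuous (V := R_NormedModule)). auto_derive. auto. }
    assert (Hb' : forall s, 0 <= s <= t -> norm (h s) <= C * exp (2 * K * s)).
    { intros s Hs. change (Rabs (h s) <= C * exp (2 * K * s)). rewrite <- (Rabs_right s) at 2 by lra. apply Hb. }
    assert (H := norm_RInt_le h (fun s => C * exp (2 * K * s)) 0 t _ _ Ht Hb'
      (RInt_correct h 0 t (ccont_exRInt h 0 t Hc)) Hg).
    change (Rabs (RInt h 0 t) <= C * exp (2 * K * Rabs t) / (2 * K)).
    change (Rabs (RInt h 0 t) <= (C * exp (2 * K * t) / (2 * K)) - (C * exp (2 * K * 0) / (2 * K))) in H.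
    rewrite (Rabs_right t) by lra. rewrite Rmult_0_r, exp_0 in H.
    assert (0 <= C * 1 / (2 * K)) by (apply Rmult_le_pos; [lra| left; apply Rinv_0_lt_compat; lra]). lra.
  - assert (Hg : is_RInt (fun s => C * exp (- (2 * K) * s)) t 0 (minus (- C * exp (- (2 * K) * 0) / (2 * K)) (- C * exp (- (2 * K) * t) / (2 * K)))).
    { apply (is_RInt_derive (V := R_CompleteNormedModule) (fun s => - C * exp (- (2 * K) * s) / (2 * K))).
      - intros s _. auto_derive. auto. field. lra.
      - intros s _. apply (ex_derive_continuous (V := R_NormedModule)). auto_derive. auto. }
    assert (Hb' : forall s, t <= s <= 0 -> norm (h s) <= C * exp (- (2 * K) * s)).
    { intros s Hs. change (Rabs (h s) <= C * exp (- (2 * K) * s)). eapply Rle_trans. apply Hb.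
      rewrite (Rabs_left1 s) by lra. replace (2 * K * - s) with (- (2 * K) * s) by ring. lra. }
    assert (H := norm_RInt_le h (fun s => C * exp (- (2 * K) * s)) t 0 _ _ (ltac:(lra)) Hb'
      (RInt_correct h t 0 (ccont_exRInt h t 0 Hc)) Hg).
    rewrite <- opp_RInt_swap by (apply ccont_exRInt; auto).
    change (Rabs (- RInt h t 0) <= C * exp (2 * K * Rabs t) / (2 * K)). rewrite Rabs_Ropp.
    change (Rabs (RInt h t 0) <= (- C * exp (- (2 * K) * 0) / (2 * K)) - (- C * exp (- (2 * K) * t) / (2 * K))) in H.
    rewrite (Rabs_left t) by lra. rewrite Rmult_0_r, exp_0 in H.
    replace (- C * exp (- (2 * K) * t) / (2 * K)) with (- (C * exp (2 * K * - t) / (2 * K))) in H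
      by (replace (2 * K * - t) with (- (2 * K) * t) by ring; field; lra).
    assert (0 <= C * 1 / (2 * K)) by (apply Rmult_le_pos; [lra| left; apply Rinv_0_lt_compat; lra]).
    replace (- C * 1 / (2 * K)) with (- (C * 1 / (2 * K))) in H by (field; lra). lra.
Qed.

Lemma Sn_pair_le n (a b : nat -> R) (c : nat -> C) :
  (forall k, (k < n)%nat -> Cmod (c k) <= Rabs (a k) + Rabs (b k)) -> Sn n c <= rsum n (fun k => Rabs (a k) + Rabs (b k)).
Proof. intros H. apply rsum_le; auto. Qed.

Section Conv.
Variables (n : nat) (A : nat -> nat -> C) (G : polymap) (x : C) (rho : R) (u : nat -> C).
Hypotheses (HG : in_ideal_y2 n G) (Hx : slit_disc2 x) (Hrho : 0 < rho) (Hrho1 : rho <= 1).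

Notation F := (Fm n A G x rho).
Notation Z := (Zp n A G x rho u).
Definition Kc := 2 * INR n * Lc n A G x rho + 1.
Definition D0 := 2 * INR n * Bc n A G x rho + 1.

Lemma Lc_nonneg : 0 <= Lc n A G x rho.
Proof. unfold Lc. pose proof (Mc_nonneg n A G x rho Hrho). lra. Qed.
Lemma Bc_nonneg : 0 <= Bc n A G x rho.
Proof. unfold Bc. apply Rmult_le_pos. apply Mc_nonneg; auto. lra. Qed.
Lemma Kc_ge1 : 1 <= Kc.
Proof. unfold Kc. pose proof Lc_nonneg. pose proof (pos_INR n). nra. Qed.

Lemma Zp_S_fst m t k : fst (Z (S m) t k) = fst (u k) + RInt (fun s => fst (F s (Z m s) k)) 0 t.
Proof. reflexivity. Qed.
Lemma Zp_S_snd m t k : snd (Z (S m) t k) = snd (u k) + RInt (fun s => snd (F s (Z m s) k)) 0 t.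
Proof. reflexivity. Qed.

Lemma Rdiff_simpl (a b c : R) : a + b - (a + c) = b - c.
Proof. ring. Qed.

Lemma Rsimpl2 (a b : R) : a + b - a = b.
Proof. ring. Qed.

Lemma RInt0 (f : R -> R) : RInt f 0 0 = 0.
Proof. apply (RInt_point (V := R_CompleteNormedModule)). Qed.

Lemma Zp_diff_le m t k : Cmod (Cminus (Z (S (S m)) t k) (Z (S m) t k)) <=
  Rabs (RInt (fun s => fst (F s (Z (S m) s) k)) 0 t - RInt (fun s => fst (F s (Z m s) k)) 0 t) +
  Rabs (RInt (fun s => snd (F s (Z (S m) s) k)) 0 t - RInt (fun s => snd (F s (Z m s) k)) 0 t).
Proof. eapply Rle_trans. apply Cmod_le_sum.
  change (Rabs (fst (Z (S (S m)) t k) - fst (Z (S m) t k)) + Rabs (snd (Z (S (S m)) t k) - snd (Z (S m) t k)) <=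
  Rabs (RInt (fun s => fst (F s (Z (S m) s) k)) 0 t - RInt (fun s => fst (F s (Z m s) k)) 0 t) +
  Rabs (RInt (fun s => snd (F s (Z (S m) s) k)) 0 t - RInt (fun s => snd (F s (Z m s) k)) 0 t)).
  rewrite !Zp_S_fst, !Zp_S_snd. rewrite !Rdiff_simpl. lra. Qed.

Lemma RInt_sub (f g : R -> R) t : ccont f -> ccont g -> RInt f 0 t - RInt g 0 t = RInt (fun s => f s - g s) 0 t.
Proof. intros Hf Hg. symmetry. apply (RInt_minus (V := R_CompleteNormedModule)); apply ccont_exRInt; auto. Qed.

Lemma ccont_minus f g : ccont f -> ccont g -> ccont (fun s => f s - g s).
Proof. intros Hf Hg t. apply (continuous_minus (V := R_NormedModule)); auto. Qed.

Lemma conv m t : Sn n (vsub (Z (S m) t) (Z m t)) <= D0 * (/ 2) ^ m * exp (2 * Kc * Rabs t).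
Proof. revert t. induction m; intros t.
  - simpl pow. rewrite Rmult_1_r. unfold Sn.
    set (B := Bc n A G x rho).
    eapply Rle_trans. apply (rsum_const_le n _ (2 * B * Rabs t)).
    { intros k Hk. destruct (integrand_cont n A G x rho Hx Hrho Hrho1 (Z 0) k (Zp_cont n A G x rho u HG Hx Hrho Hrho1 0) Hk) as [C1 C2].
      assert (Bd : forall s0, Cmod (F s0 (Z 0 s0) k) <= B) by (intros; eapply Rle_trans; [apply (Cmod_le_Sn n _ k Hk)| apply Fm_bound; auto]).
      pose proof (int_lip _ B C1 (fun s0 => Rle_trans _ _ _ (re_le_Cmod _) (Bd s0)) t 0).
      pose proof (int_lip _ B C2 (fun s0 => Rle_trans _ _ _ (im_le_Cmod _) (Bd s0)) t 0).
      rewrite !RInt0 in H, H0. rewrite !Rminus_0_r in H, H0.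
      unfold vsub. eapply Rle_trans. apply Cmod_le_sum.
      change (Rabs (fst (u k) + RInt (fun s => fst (F s (Z 0 s) k)) 0 t - fst (u k)) + Rabs (snd (u k) + RInt (fun s => snd (F s (Z 0 s) k)) 0 t - snd (u k)) <= 2 * B * Rabs t).
      rewrite !Rsimpl2.
      lra. }
    unfold D0. fold B. pose proof (pos_INR n). pose proof Kc_ge1. pose proof Bc_nonneg. fold B in H1.
    pose proof (Rabs_pos t). pose proof (exp_ineq1_le (2 * Kc * Rabs t)).
    assert (Rabs t <= exp (2 * Kc * Rabs t)) by nra.
    assert (0 <= exp (2 * Kc * Rabs t)) by (left; apply exp_pos).
    assert (INR n * B * Rabs t <= INR n * B * exp (2 * Kc * Rabs t)) by (apply Rmult_le_compat_l; nra). nra.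
  - set (L := Lc n A G x rho). unfold Sn.
    eapply Rle_trans. apply (rsum_const_le n _ (2 * (L * (D0 * (/ 2) ^ m) * exp (2 * Kc * Rabs t) / (2 * Kc)))).
    { intros k Hk. unfold vsub. eapply Rle_trans. apply Zp_diff_le.
      destruct (integrand_cont n A G x rho Hx Hrho Hrho1 (Z m) k (Zp_cont n A G x rho u HG Hx Hrho Hrho1 m) Hk) as [C1 C2].
      destruct (integrand_cont n A G x rho Hx Hrho Hrho1 (Z (S m)) k (Zp_cont n A G x rho u HG Hx Hrho Hrho1 (S m)) Hk) as [C3 C4].
      rewrite !RInt_sub by auto.
      assert (Hd : forall s, Cmod (Cminus (F s (Z (S m) s) k) (F s (Z m s) k)) <= L * (D0 * (/ 2) ^ m) * exp (2 * Kc * Rabs s)).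
      { intros s. eapply Rle_trans. apply (Cmod_le_Sn n (vsub (F s (Z (S m) s)) (F s (Z m s))) k Hk).
        eapply Rle_trans. apply Fm_lip; auto. rewrite Rmult_assoc. apply Rmult_le_compat_l. apply Lc_nonneg. apply IHm. }
      assert (HC : 0 <= L * (D0 * (/ 2) ^ m)).
      { apply Rmult_le_pos. apply Lc_nonneg. apply Rmult_le_pos. unfold D0; pose proof Bc_nonneg; pose proof (pos_INR n); nra.
        apply pow_le; lra. }
      pose proof Kc_ge1.
      pose proof (int_exp_bound _ _ Kc t (ccont_minus _ _ C3 C1) ltac:(lra) HC
        (fun s => Rle_trans _ _ _ (re_le_Cmod (Cminus (F s (Z (S m) s) k) (F s (Z m s) k))) (Hd s))).
      pose proof (int_exp_bound _ _ Kc t (ccont_minus _ _ C4 C2) ltac:(lra) HC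
        (fun s => Rle_trans _ _ _ (im_le_Cmod (Cminus (F s (Z (S m) s) k) (F s (Z m s) k))) (Hd s))).
      cbv beta in H0, H1. lra. }
    pose proof Kc_ge1. pose proof (pos_INR n). pose proof Lc_nonneg.
    assert (0 <= D0 * (/ 2) ^ m * exp (2 * Kc * Rabs t)).
    { apply Rmult_le_pos. apply Rmult_le_pos. unfold D0; pose proof Bc_nonneg; pose proof (pos_INR n); nra.
      apply pow_le; lra. left; apply exp_pos. }
    replace (INR n * (2 * (L * (D0 * (/ 2) ^ m) * exp (2 * Kc * Rabs t) / (2 * Kc)))) with
      ((INR n * L / Kc) * (D0 * (/ 2) ^ m * exp (2 * Kc * Rabs t))) by (field; lra).
    replace (D0 * (/ 2) ^ S m * exp (2 * Kc * Rabs t)) with ((/ 2) * (D0 * (/ 2) ^ m * exp (2 * Kc * Rabs t))) by (simpl; ring).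
    apply Rmult_le_compat_r; auto.
    apply Rmult_le_reg_r with Kc. lra. unfold Rdiv. rewrite Rmult_assoc, Rinv_l by lra.
    unfold Kc; fold L. lra.
Qed.
End Conv.

Lemma geom_partial (a : nat -> R) E : 0 <= E -> (forall m, Rabs (a (S m) - a m) <= E * (/2)^m) ->
  forall m j, Rabs (a (j + m)%nat - a m) <= 2 * E * (/2)^m * (1 - (/2)^j).
Proof. intros HE H m j. induction j; simpl.
  - rewrite Rminus_diag, Rabs_R0. lra.
  - replace (a (S (j + m)) - a m) with ((a (S (j + m)) - a (j + m)%nat) + (a (j + m)%nat - a m)) by ring.
    eapply Rle_trans. apply Rabs_triang. pose proof (H (j + m)%nat). rewrite pow_add in H0.
    assert (0 <= (/2)^j) by (apply pow_le; lra). assert (0 <= (/2)^m) by (apply pow_le; lra).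
    assert (0 <= E * (/2)^m) by (apply Rmult_le_pos; auto).
    nra. Qed.

Lemma geom_limit (a : nat -> R) E : 0 <= E -> (forall m, Rabs (a (S m) - a m) <= E * (/2)^m) ->
  exists l, Un_cv a l /\ forall m, Rabs (l - a m) <= 2 * E * (/2)^m.
Proof. intros HE H.
  assert (Hp : forall m p, (m <= p)%nat -> Rabs (a p - a m) <= 2 * E * (/2)^m).
  { intros m p Hmp. replace p with ((p - m) + m)%nat by lia. eapply Rle_trans; [apply (geom_partial a E HE H)|].
    assert (0 <= (/2)^(p-m)) by (apply pow_le; lra). assert (0 <= (/2)^m) by (apply pow_le; lra).
    assert (0 <= 2 * E * (/2)^m) by (apply Rmult_le_pos; lra). nra. }
  assert (Hc : Cauchy_crit a).
  { intros eps Heps. destruct (pow_lt_1_zero (/2) ltac:(rewrite Rabs_right; lra) (eps / (4 * E + 1)) ltac:(apply Rdiv_lt_0_compat; lra)) as [N HN].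
    exists N. intros p q Hp' Hq'. unfold Rdist.
    assert (HN' := HN N (le_n N)). rewrite Rabs_right in HN' by (apply Rle_ge, pow_le; lra).
    replace (a p - a q) with ((a p - a N) - (a q - a N)) by ring.
    eapply Rle_lt_trans. apply Rabs_triang. rewrite Rabs_Ropp.
    pose proof (Hp N p Hp'). pose proof (Hp N q Hq').
    assert (4 * E * (/2)^N < eps).
    { apply Rmult_lt_reg_r with (/ (4 * E + 1)). apply Rinv_0_lt_compat; lra.
      assert (0 <= (/2)^N) by (apply pow_le; lra).
      assert (4 * E * (/ 2) ^ N * / (4 * E + 1) <= (/2)^N).
      { apply Rmult_le_reg_r with (4 * E + 1). lra. rewrite Rmult_assoc, Rinv_l by lra. nra. }
      unfold Rdiv in HN'. lra. }
    lra. }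
  destruct (Rcomplete.R_complete a Hc) as [l Hl]. exists l. split; auto.
  intros m. apply le_epsilon. intros eta Heta.
  destruct (Hl eta Heta) as [N HN]. specialize (HN (max N m) ltac:(lia)). unfold R_dist in HN.
  replace (l - a m) with ((a (max N m) - a m) - (a (max N m) - l)) by ring.
  eapply Rle_trans. apply Rabs_triang. rewrite Rabs_Ropp. pose proof (Hp m (max N m) ltac:(lia)). lra. Qed.

Section Lim.
Variables (n : nat) (A : nat -> nat -> C) (G : polymap) (x : C) (rho : R) (u : nat -> C).
Hypotheses (HG : in_ideal_y2 n G) (Hx : slit_disc2 x) (Hrho : 0 < rho) (Hrho1 : rho <= 1).

Notation F := (Fm n A G x rho).
Notation Z := (Zp n A G x rho u).

Definition zlim (t : R) (k : nat) : C :=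
  (real (Lim_seq (fun m => fst (Z m t k))), real (Lim_seq (fun m => snd (Z m t k)))).

Definition Et t := D0 n A G x rho * exp (2 * Kc n A G x rho * Rabs t).

Lemma Et_nonneg t : 0 <= Et t.
Proof. unfold Et, D0. apply Rmult_le_pos. pose proof (Bc_nonneg n A G x rho Hrho). pose proof (pos_INR n). nra.
  left; apply exp_pos. Qed.

Lemma step_fst t k m : (k < n)%nat -> Rabs (fst (Z (S m) t k) - fst (Z m t k)) <= Et t * (/2)^m.
Proof. intros Hk. eapply Rle_trans. apply (re_le_Cmod (Cminus (Z (S m) t k) (Z m t k))).
  eapply Rle_trans. apply (Cmod_le_Sn n (vsub (Z (S m) t) (Z m t)) k Hk).
  eapply Rle_trans. apply conv; auto. unfold Et. right; ring. Qed.
Lemma step_snd t k m : (k < n)%nat -> Rabs (snd (Z (S m) t k) - snd (Z m t k)) <= Et t * (/2)^m.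
Proof. intros Hk. eapply Rle_trans. apply (im_le_Cmod (Cminus (Z (S m) t k) (Z m t k))).
  eapply Rle_trans. apply (Cmod_le_Sn n (vsub (Z (S m) t) (Z m t)) k Hk).
  eapply Rle_trans. apply conv; auto. unfold Et. right; ring. Qed.

Lemma lim_real (a : nat -> R) l : Un_cv a l -> real (Lim_seq a) = l.
Proof. intros H. apply is_lim_seq_Reals in H. rewrite (is_lim_seq_unique a l H). reflexivity. Qed.

Lemma zlim_fst t k : (k < n)%nat -> Un_cv (fun m => fst (Z m t k)) (fst (zlim t k)) /\
   forall m, Rabs (fst (zlim t k) - fst (Z m t k)) <= 2 * Et t * (/2)^m.
Proof. intros Hk. destruct (geom_limit (fun m => fst (Z m t k)) (Et t) (Et_nonneg t) (fun m => step_fst t k m Hk)) as [l [H1 H2]].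
  unfold zlim; simpl. rewrite (lim_real _ l H1). auto. Qed.
Lemma zlim_snd t k : (k < n)%nat -> Un_cv (fun m => snd (Z m t k)) (snd (zlim t k)) /\
   forall m, Rabs (snd (zlim t k) - snd (Z m t k)) <= 2 * Et t * (/2)^m.
Proof. intros Hk. destruct (geom_limit (fun m => snd (Z m t k)) (Et t) (Et_nonneg t) (fun m => step_snd t k m Hk)) as [l [H1 H2]].
  unfold zlim; simpl. rewrite (lim_real _ l H1). auto. Qed.

Lemma zlim_close t m : Sn n (vsub (zlim t) (Z m t)) <= INR n * (4 * Et t * (/2)^m).
Proof. apply rsum_const_le. intros k Hk. unfold vsub. eapply Rle_trans. apply Cmod_le_sum.
  destruct (zlim_fst t k Hk) as [_ H1]. destruct (zlim_snd t k Hk) as [_ H2]. specialize (H1 m). specialize (H2 m).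
  change (Rabs (fst (zlim t k) - fst (Z m t k)) + Rabs (snd (zlim t k) - snd (Z m t k)) <= 4 * Et t * (/ 2) ^ m). lra. Qed.

Lemma Zp_at0 m k : Z m 0 k = u k.
Proof. destruct m. reflexivity. simpl. rewrite !RInt0. apply injective_projections; simpl; ring. Qed.

Lemma zlim_at0 k : (k < n)%nat -> zlim 0 k = u k.
Proof. intros Hk. unfold zlim.
  rewrite (Lim_seq_ext _ (fun _ => fst (u k))) by (intros; rewrite Zp_at0; auto).
  rewrite (Lim_seq_ext (fun m => snd (Z m 0 k)) (fun _ => snd (u k))) by (intros; rewrite Zp_at0; auto).
  rewrite !Lim_seq_const. simpl. destruct (u k); auto. Qed.
End Lim.

Lemma Un_cv_shift (a : nat -> R) l : Un_cv a l -> Un_cv (fun m => a (S m)) l.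
Proof. intros H. apply is_lim_seq_Reals. apply is_lim_seq_Reals in H. apply -> (is_lim_seq_incr_1 a l). auto. Qed.

Section Deriv.
Variables (n : nat) (A : nat -> nat -> C) (G : polymap) (x : C) (rho : R) (u : nat -> C).
Hypotheses (HG : in_ideal_y2 n G) (Hx : slit_disc2 x) (Hrho : 0 < rho) (Hrho1 : rho <= 1).

Notation F := (Fm n A G x rho).
Notation Z := (Zp n A G x rho u).
Notation z := (zlim n A G x rho u).

Definition d1 : posreal := mkposreal 1 Rlt_0_1.

Lemma Et_bound y : Boule (1/2) d1 y -> Et n A G x rho y <= D0 n A G x rho * exp (4 * Kc n A G x rho).
Proof. intros Hy. unfold Boule, d1 in Hy; simpl in Hy. unfold Et. apply Rmult_le_compat_l.
  unfold D0. pose proof (Bc_nonneg n A G x rho Hrho). pose proof (pos_INR n). nra.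
  destruct (Req_dec (2 * Kc n A G x rho * Rabs y) (4 * Kc n A G x rho)) as [E|E]. rewrite E; lra.
  left; apply exp_increasing. pose proof (Kc_ge1 n A G x rho Hrho).
  assert (Rabs y <= 2) by (revert Hy; unfold Rabs; repeat destruct Rcase_abs; intros; lra). nra. Qed.

Lemma deriv_gen (proj : C -> R) (Hproj : forall c, Rabs (proj c) <= Cmod c)
  (Hlin : forall c c', proj (Cminus c c') = proj c - proj c')
  (Hint : forall m t k, proj (Z (S m) t k) = proj (u k) + RInt (fun s => proj (F s (Z m s) k)) 0 t)
  (Hcont : forall m k, (k < n)%nat -> ccont (fun s => proj (F s (Z m s) k)))
  (Hcv : forall t k, (k < n)%nat -> Un_cv (fun m => proj (Z m t k)) (proj (z t k)))
  k y : (k < n)%nat -> Boule (1/2) d1 y ->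
  derivable_pt_lim (fun t => proj (z t k)) y (proj (F y (z y) k)).
Proof. intros Hk Hy.
  apply (CVU_derivable (fun m t => proj (Z (S m) t k)) (fun m t => proj (F t (Z m t) k))
     (fun t => proj (z t k)) (fun t => proj (F t (z t) k)) (1/2) d1); auto.
  - intros eps Heps.
    set (L := Lc n A G x rho). set (Cst := L * (INR n * (4 * (D0 n A G x rho * exp (4 * Kc n A G x rho))))).
    assert (HL : 0 <= L) by apply Lc_nonneg, Hrho.
    assert (HC : 0 <= Cst).
    { unfold Cst. apply Rmult_le_pos; auto. apply Rmult_le_pos. apply pos_INR.
      pose proof (Et_nonneg n A G x rho Hrho 0). unfold Et in H. rewrite Rabs_R0, Rmult_0_r, exp_0 in H.
      assert (0 < exp (4 * Kc n A G x rho)) by apply exp_pos. nra. }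
    destruct (pow_lt_1_zero (/2) ltac:(rewrite Rabs_right; lra) (eps / (Cst + 1)) ltac:(apply Rdiv_lt_0_compat; lra)) as [N HN].
    exists N. intros m t Hm Ht.
    assert (HN' := HN m Hm). rewrite Rabs_right in HN' by (apply Rle_ge, pow_le; lra).
    rewrite <- Hlin. eapply Rle_lt_trans. apply Hproj.
    eapply Rle_lt_trans. apply (Cmod_le_Sn n (vsub (F t (z t)) (F t (Z m t))) k Hk).
    eapply Rle_lt_trans. apply Fm_lip; auto.
    eapply Rle_lt_trans. apply Rmult_le_compat_l; auto. apply zlim_close; auto.
    assert (Hp : 0 <= (/2)^m) by (apply pow_le; lra).
    assert (L * (INR n * (4 * Et n A G x rho t * (/ 2) ^ m)) <= Cst * (/2)^m).
    { unfold Cst. replace (L * (INR n * (4 * Et n A G x rho t * (/ 2) ^ m))) with (L * (INR n * (4 * (/ 2) ^ m)) * Et n A G x rho t) by ring.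
      replace (L * (INR n * (4 * (D0 n A G x rho * exp (4 * Kc n A G x rho)))) * (/ 2) ^ m) with
        (L * (INR n * (4 * (/ 2) ^ m)) * (D0 n A G x rho * exp (4 * Kc n A G x rho))) by ring.
      apply Rmult_le_compat_l. apply Rmult_le_pos; auto. apply Rmult_le_pos. apply pos_INR. lra.
      apply Et_bound; auto. }
    assert (Cst * (/2)^m < eps).
    { apply Rle_lt_trans with ((Cst + 1) * (/2)^m). nra.
      apply Rmult_lt_reg_r with (/ (Cst + 1)). apply Rinv_0_lt_compat; lra.
      replace ((Cst + 1) * (/ 2) ^ m * / (Cst + 1)) with ((/2)^m) by (field; lra). exact HN'. }
    fold L. lra.
  - intros t Ht. apply (Un_cv_shift (fun m => proj (Z m t k))). apply Hcv; auto.
  - intros m t Ht. apply is_derive_Reals. apply (is_derive_ext (fun t => proj (u k) + RInt (fun s => proj (F s (Z m s) k)) 0 t)).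
    intros; rewrite Hint; auto. apply int_deriv. apply Hcont; auto.
Qed.

Lemma zlim_deriv k y : (k < n)%nat -> Boule (1/2) d1 y -> is_derive (fun t => z t k) y (F y (z y) k).
Proof. intros Hk Hy.
  assert (Hc : forall m k', (k' < n)%nat -> ccont (fun s => fst (F s (Z m s) k')) /\ ccont (fun s => snd (F s (Z m s) k'))).
  { intros m k' Hk'. apply (integrand_cont n A G x rho Hx Hrho Hrho1 (Z m) k' (Zp_cont n A G x rho u HG Hx Hrho Hrho1 m) Hk'). }
  assert (H1 : derivable_pt_lim (fun t => fst (z t k)) y (fst (F y (z y) k))).
  { apply (deriv_gen fst re_le_Cmod (fun c c' => eq_refl) (fun m t k => eq_refl)
      (fun m k' Hk' => proj1 (Hc m k' Hk')) (fun t k' Hk' => proj1 (zlim_fst n A G x rho u HG Hx Hrho Hrho1 t k' Hk')) k y Hk Hy). }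
  assert (H2 : derivable_pt_lim (fun t => snd (z t k)) y (snd (F y (z y) k))).
  { apply (deriv_gen snd im_le_Cmod (fun c c' => eq_refl) (fun m t k => eq_refl)
      (fun m k' Hk' => proj2 (Hc m k' Hk')) (fun t k' Hk' => proj1 (zlim_snd n A G x rho u HG Hx Hrho Hrho1 t k' Hk')) k y Hk Hy). }
  apply is_derive_Reals in H1. apply is_derive_Reals in H2.
  pose proof (is_derive_C_pair _ _ y _ _ H1 H2).
  rewrite <- surjective_pairing in H. eapply is_derive_ext; [|apply H]. intros; simpl. apply surjective_pairing. Qed.
End Deriv.

Lemma Qn_scal n s w : Qn n (fun k => Cmult (RtoC s) (w k)) = s ^ 2 * Qn n w.
Proof. unfold Qn. rewrite <- rsum_scal. apply rsum_ext; intros. rewrite Cmod_mult, Cmod_R.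
  rewrite Rpow_mult_distr, pow2_abs. auto. Qed.
Lemma vnorm_scal n s w : 0 <= s -> vnorm n (fun k => Cmult (RtoC s) (w k)) = s * vnorm n w.
Proof. intros Hs. rewrite !vnorm_Q, Qn_scal, sqrt_mult_alt by (apply pow2_ge_0). rewrite sqrt_pow2; auto. Qed.

Lemma cinner_scal n s h w : cinner n (fun k => Cmult (RtoC s) (h k)) w = Cmult (RtoC s) (cinner n h w).
Proof. unfold cinner. rewrite <- csum_scal. apply csum_ext; intros. Ceq. Qed.

Lemma Cmult_inv_cancel s e : s <> 0 -> Cmult (RtoC s) (Cmult (RtoC (/ s)) e) = e.
Proof. intros Hs. destruct e. apply injective_projections; simpl; field; auto. Qed.

Lemma matvec_scal n A s w k : matvec n A (fun j => Cmult (RtoC s) (w j)) k = Cmult (RtoC s) (matvec n A w k).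
Proof. unfold matvec. rewrite <- csum_scal. apply csum_ext; intros. Ceq. Qed.

Lemma rsum_zero m : rsum m (fun _ => 0) = 0.
Proof. induction m; simpl; auto. rewrite IHm; lra. Qed.

Definition PC1 n G := rsum n (fun k => PC n 1 (G k)).

Section Main1.
Variables (n : nat) (A : nat -> nat -> C) (G : polymap) (delta0 delta1 eps rho : R).
Hypotheses (HG : in_ideal_y2 n G) (Hd0 : 0 < delta0) (Hd1 : 0 < delta1) (He : 0 < eps).
Hypothesis (HA : forall y : nat -> C, vnorm n y <> 0 ->
     (- delta1 + eps) * (vnorm n y) ^ 2 < Re (cinner n (matvec n A y) y) /\
     Re (cinner n (matvec n A y) y) < (- delta0 - eps) * (vnorm n y) ^ 2).
Hypotheses (Hrho : 0 < rho) (Hrho1 : rho <= 1) (Hsmall : rho * PC1 n G <= eps).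

Lemma PC1_nonneg : 0 <= PC1 n G.
Proof. apply rsum_nonneg; intros; apply PC_nonneg; lra. Qed.

Lemma G_small X u v : Cmod X <= 2 -> vnorm n u <= rho -> vnorm n v <= rho ->
  Sn n (vsub (eval_poly n G X u) (eval_poly n G X v)) <= rho * PC1 n G * vnorm n (vsub u v).
Proof. intros HX Hu Hv. pose proof (G_diff n G X u v rho ltac:(lra) HX Hu Hv).
  assert (rsum n (fun k => PC n rho (G k)) <= rho ^ 2 * PC1 n G).
  { unfold PC1. rewrite <- rsum_scal. apply rsum_le; intros. apply PC_small. lra. intros m Hm. apply (HG k m H0 Hm). }
  pose proof (vnorm_nonneg n (vsub u v)).
  apply Rmult_le_reg_l with rho; auto. eapply Rle_trans. apply H.
  replace (rho * (rho * PC1 n G * vnorm n (vsub u v))) with ((rho ^ 2 * PC1 n G) * vnorm n (vsub u v)) by ring.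
  apply Rmult_le_compat_r; auto. Qed.

Lemma Sn_G_small X w : Cmod X <= 2 -> vnorm n w <= rho -> Sn n (eval_poly n G X w) <= rho * PC1 n G * vnorm n w.
Proof. intros HX Hw. rewrite <- (Sn_ext n (vsub (eval_poly n G X w) (eval_poly n G X (fun _ => RtoC 0)))).
  rewrite <- (vnorm_zero_sub n w). apply G_small; auto. rewrite vnorm_Q. unfold Qn. 
  rewrite (rsum_ext _ _ (fun _ => 0)) by (intros; rewrite Cmod_0; ring). 
  rewrite rsum_zero, sqrt_0. lra.
  intros k Hk. unfold vsub. rewrite (eval_poly_evl n G X (fun _ => RtoC 0)), evl_zero. Ceq.
  intros m Hm. apply (HG k m Hk Hm). Qed.

Lemma F_energy x t w : slit_disc2 x ->
  Re (cinner n (Fm n A G x rho t w) w) <= (delta0 + cst n A delta1 eps) * Qn n w.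
Proof. intros Hx. set (s := sig n rho w). assert (Hs := sig_bound n rho Hrho w). fold s in Hs.
  set (X := Xt x t).
  set (g := fun k => Cmult (RtoC (/ s)) (eval_poly n G X (Pr n rho w) k)).
  assert (HF : forall k, Fm n A G x rho t w k = Cmult (RtoC s) (Cmult (lamx x) (Cplus (matvec n A w k) (g k)))).
  { intros k. unfold Fm. fold X. unfold Pr at 1. fold s. rewrite matvec_scal.
    replace (eval_poly n G X (Pr n rho w) k) with (Cmult (RtoC s) (g k)) by (unfold g; apply Cmult_inv_cancel; lra).
    Ceq. }
  unfold cinner at 1. rewrite (csum_ext n _ (fun k => Cmult (RtoC s) (Cmult (Cmult (lamx x) (Cplus (matvec n A w k) (g k))) (Cconj (w k))))).
  2:{ intros k _. rewrite HF. Ceq. }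
  rewrite csum_scal. rewrite re_scal_l. fold (cinner n (fun k => Cmult (lamx x) (Cplus (matvec n A w k) (g k))) w).
  assert (Hg : Cmod (cinner n g w) <= eps * Qn n w).
  { eapply Rle_trans. apply Cmod_cinner. unfold g. rewrite Sn_scal.
    assert (HP : vnorm n (Pr n rho w) = s * vnorm n w) by (unfold Pr; fold s; apply vnorm_scal; lra).
    assert (H1 := Sn_G_small X (Pr n rho w) (Xt_bound x t Hx) (vnorm_Pr n rho Hrho w)). rewrite HP in H1.
    rewrite Rabs_right by (apply Rle_ge; left; apply Rinv_0_lt_compat; lra).
    rewrite <- vnorm_sq. pose proof (vnorm_nonneg n w). pose proof PC1_nonneg.
    assert (0 < / s) by (apply Rinv_0_lt_compat; lra).
    assert (H4 : / s * Sn n (eval_poly n G X (Pr n rho w)) <= / s * (rho * PC1 n G * (s * vnorm n w))) by (apply Rmult_le_compat_l; lra).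
    replace (/ s * (rho * PC1 n G * (s * vnorm n w))) with (rho * PC1 n G * vnorm n w) in H4 by (field; lra).
    assert (/ s * Sn n (eval_poly n G X (Pr n rho w)) * vnorm n w <= rho * PC1 n G * vnorm n w * vnorm n w) by (apply Rmult_le_compat_r; auto).
    assert (rho * PC1 n G * vnorm n w * vnorm n w <= eps * vnorm n w ^ 2).
    { simpl. replace (eps * (vnorm n w * (vnorm n w * 1))) with (eps * (vnorm n w * vnorm n w)) by ring.
      rewrite Rmult_assoc. apply Rmult_le_compat_r; auto. apply Rmult_le_pos; auto. }
    lra. }
  destruct (energy_core n A delta0 delta1 eps Hd0 Hd1 He HA x w g Hx Hg) as [H1 _].
  pose proof (slit_ln x Hx). pose proof (Qn_nonneg n w).
  set (a := ln (Cmod x) * delta0 + cst n A delta1 eps) in *.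
  assert (a <= delta0 + cst n A delta1 eps) by (unfold a; nra).
  destruct (Rle_lt_dec 0 a).
  - assert (s * Re (cinner n (fun k => Cmult (lamx x) (Cplus (matvec n A w k) (g k))) w) <= s * (a * Qn n w)) by (apply Rmult_le_compat_l; lra).
    assert (s * (a * Qn n w) <= a * Qn n w) by (assert (0 <= a * Qn n w) by nra; nra). nra.
  - assert (s * Re (cinner n (fun k => Cmult (lamx x) (Cplus (matvec n A w k) (g k))) w) <= s * (a * Qn n w)) by (apply Rmult_le_compat_l; lra).
    assert (a * Qn n w <= 0) by nra. assert (0 <= (delta0 + cst n A delta1 eps) * Qn n w).
    { apply Rmult_le_pos; auto. unfold cst. pose proof (KA_nonneg n A). pose proof PI_RGT_0. nra. }
    nra.
Qed.
End Main1.

Lemma cst_pos n A delta1 eps : 0 < delta1 -> 0 < eps -> 0 < cst n A delta1 eps.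
Proof. intros. unfold cst. pose proof (KA_nonneg n A). pose proof PI_RGT_0. nra. Qed.

Section Main2.
Variables (n : nat) (A : nat -> nat -> C) (G : polymap) (delta0 delta1 eps rho : R).
Hypotheses (HG : in_ideal_y2 n G) (Hd0 : 0 < delta0) (Hd1 : 0 < delta1) (He : 0 < eps).
Hypothesis (HA : forall y : nat -> C, vnorm n y <> 0 ->
     (- delta1 + eps) * (vnorm n y) ^ 2 < Re (cinner n (matvec n A y) y) /\
     Re (cinner n (matvec n A y) y) < (- delta0 - eps) * (vnorm n y) ^ 2).
Hypotheses (Hrho : 0 < rho) (Hrho1 : rho <= 1) (Hsmall : rho * PC1 n G <= eps).
Variables (x : C) (u : nat -> C).
Hypothesis (Hx : slit_disc2 x).

Notation z := (zlim n A G x rho u).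
Definition kap := delta0 + cst n A delta1 eps.
Definition rr := rho / ((INR n + 1) * exp kap).

Lemma boule01 t : 0 <= t <= 1 -> Boule (1/2) d1 t.
Proof. intros Ht. unfold Boule, d1; simpl. unfold Rabs; destruct Rcase_abs; lra. Qed.

Lemma z_apriori t : 0 <= t <= 1 -> Qn n (z t) <= exp (2 * kap * t) * Qn n u.
Proof. intros Ht.
  assert (E0 : Qn n (z 0) = Qn n u) by (apply Qn_ext; intros; apply zlim_at0; auto).
  rewrite <- E0.
  apply (gronwall (fun t => Qn n (z t)) (fun t => 2 * Re (cinner n (Fm n A G x rho t (z t)) (z t))) kap); auto.
  - intros s Hs. apply is_derive_Qn. intros k Hk. apply zlim_deriv; auto. apply boule01; auto.
  - intros s Hs. pose proof (F_energy n A G delta0 delta1 eps rho HG Hd0 Hd1 He HA Hrho Hrho1 Hsmall x s (z s) Hx).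
    unfold kap. lra. Qed.

Lemma kap_pos : 0 < kap.
Proof. unfold kap. pose proof (cst_pos n A delta1 eps Hd1 He). lra. Qed.

Lemma z_small t : 0 <= t <= 1 -> vnorm n (z t) <= exp kap * vnorm n u.
Proof. intros Ht. rewrite !vnorm_Q. pose proof (z_apriori t Ht). pose proof (Qn_nonneg n u).
  assert (exp (2 * kap * t) <= exp (2 * kap)).
  { pose proof kap_pos. destruct (Req_dec t 1). subst; rewrite Rmult_1_r; lra. left; apply exp_increasing. nra. }
  assert (Qn n (z t) <= exp (2 * kap) * Qn n u) by (eapply Rle_trans; [apply H|]; apply Rmult_le_compat_r; auto).
  rewrite <- (sqrt_pow2 (exp kap)) by (left; apply exp_pos). rewrite <- sqrt_mult_alt by apply pow2_ge_0.
  apply sqrt_le_1_alt. replace (exp kap ^ 2) with (exp (2 * kap)); auto.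
  simpl. rewrite Rmult_1_r, <- exp_plus. f_equal; ring. Qed.

Hypothesis (Hu : vnorm n u < rr).

Lemma z_in t : 0 <= t <= 1 -> Sn n (z t) <= rho.
Proof. intros Ht. eapply Rle_trans. apply Sn_le_vnorm.
  pose proof (z_small t Ht). pose proof (pos_INR n). pose proof (exp_pos kap).
  assert (vnorm n u * ((INR n + 1) * exp kap) < rho).
  { unfold rr in Hu. apply Rmult_lt_reg_r with (/ ((INR n + 1) * exp kap)). apply Rinv_0_lt_compat; nra.
    rewrite Rmult_assoc, Rinv_r by nra. rewrite Rmult_1_r. exact Hu. }
  pose proof (vnorm_nonneg n u). pose proof (vnorm_nonneg n (z t)).
  assert (INR n * vnorm n (z t) <= INR n * (exp kap * vnorm n u)) by (apply Rmult_le_compat_l; auto).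
  nra. Qed.

Lemma z_flow : is_flow_sol n A G x u z.
Proof. split.
  - intros k Hk. apply zlim_at0; auto.
  - intros t Ht k Hk. 
    replace (Cmult (Copp (Clog x)) (Cplus (matvec n A (z t) k) (eval_poly n G (cpow_real x (1 - t)) (z t) k)))
      with (Fm n A G x rho t (z t) k).
    apply zlim_deriv; auto. apply boule01; auto.
    unfold Fm, lamx, Xt. rewrite clamp_id by auto.
    rewrite (matvec_ext n A (Pr n rho (z t)) (z t)) by (intros; apply Pr_id; auto; apply z_in; auto).
    rewrite !eval_poly_evl, (evl_ext n (G k) _ (Pr n rho (z t)) (z t)) by (intros; apply Pr_id; auto; apply z_in; auto).
    auto. Qed.
End Main2.

Lemma cpow_bound x t : slit_disc2 x -> 0 <= t <= 1 -> Cmod (cpow_real x (1 - t)) <= 2.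
Proof. intros Hx Ht. pose proof (Xt_bound x t Hx). unfold Xt in H. rewrite clamp_id in H; auto. Qed.

Lemma Sn_lam n c a b : Sn n (fun k => Cmult c (Cplus (a k) (b k))) <= Cmod c * (Sn n a + Sn n b).
Proof. unfold Sn. rewrite <- rsum_plus, <- rsum_scal. apply rsum_le; intros.
  rewrite Cmod_mult. apply Rmult_le_compat_l. apply Cmod_ge_0. apply Cmod_triangle. Qed.

Lemma is_derive_valC (f : R -> C) t (l l' : C) : is_derive f t l -> l = l' -> is_derive f t l'.
Proof. intros H ->; auto. Qed.

Section Main3.
Variables (n : nat) (A : nat -> nat -> C) (G : polymap) (x : C).
Hypothesis (Hx : slit_disc2 x).

Definition Dv (y1 y2 : R -> nat -> C) t : nat -> C := fun k =>
  Cmult (lamx x) (Cplus (matvec n A (vsub (y1 t) (y2 t)) k)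
     (vsub (eval_poly n G (cpow_real x (1 - t)) (y1 t)) (eval_poly n G (cpow_real x (1 - t)) (y2 t)) k)).

Lemma flow_diff_deriv u1 u2 y1 y2 t k : is_flow_sol n A G x u1 y1 -> is_flow_sol n A G x u2 y2 ->
  0 <= t <= 1 -> (k < n)%nat -> is_derive (fun s => vsub (y1 s) (y2 s) k) t (Dv y1 y2 t k).
Proof. intros [_ H1] [_ H2] Ht Hk.
  pose proof (@is_derive_minus R_AbsRing C_R_NormedModule _ _ t _ _ (H1 t Ht k Hk) (H2 t Ht k Hk)).
  eapply is_derive_ext; [|eapply is_derive_valC; [apply H|]]. intros; reflexivity.
  unfold Dv. rewrite matvec_sub. unfold vsub, lamx. unfold minus, plus, opp; simpl. apply injective_projections; simpl; unfold plus, opp; simpl; ring.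
Qed.

Lemma Q_diff_deriv u1 u2 y1 y2 t : is_flow_sol n A G x u1 y1 -> is_flow_sol n A G x u2 y2 ->
  0 <= t <= 1 -> is_derive (fun s => Qn n (vsub (y1 s) (y2 s))) t (2 * Re (cinner n (Dv y1 y2 t) (vsub (y1 t) (y2 t)))).
Proof. intros H1 H2 Ht. apply (is_derive_Qn n (fun s => vsub (y1 s) (y2 s))). intros k Hk.
  apply (flow_diff_deriv u1 u2); auto. Qed.

Lemma flow_Q_deriv u y t : is_flow_sol n A G x u y -> 0 <= t <= 1 ->
  exists l, is_derive (fun s => Qn n (y s)) t l.
Proof. intros [_ H] Ht. eexists. apply (is_derive_Qn n y). intros k Hk. apply H; auto. Qed.

Lemma uniqueness u y1 y2 : is_flow_sol n A G x u y1 -> is_flow_sol n A G x u y2 ->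
  forall t, 0 <= t <= 1 -> forall k, (k < n)%nat -> y1 t k = y2 t k.
Proof. intros F1 F2.
  destruct (continuity_ab_maj (fun t => Qn n (y1 t) + Qn n (y2 t)) 0 1 ltac:(lra)) as [Mx [HM _]].
  { intros c Hc. destruct (flow_Q_deriv u y1 c F1 Hc) as [l1 D1]. destruct (flow_Q_deriv u y2 c F2 Hc) as [l2 D2].
    eapply is_derive_contpt. apply (@is_derive_plus R_AbsRing R_NormedModule _ _ _ _ _ D1 D2). }
  set (rp := sqrt (Qn n (y1 Mx) + Qn n (y2 Mx)) + 1).
  assert (Hrp : 0 < rp) by (unfold rp; pose proof (sqrt_pos (Qn n (y1 Mx) + Qn n (y2 Mx))); lra).
  assert (Hb : forall t, 0 <= t <= 1 -> vnorm n (y1 t) <= rp /\ vnorm n (y2 t) <= rp).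
  { intros t Ht. specialize (HM t Ht). simpl in HM. pose proof (Qn_nonneg n (y1 t)). pose proof (Qn_nonneg n (y2 t)).
    unfold rp. rewrite !vnorm_Q. split.
    - assert (sqrt (Qn n (y1 t)) <= sqrt (Qn n (y1 Mx) + Qn n (y2 Mx))) by (apply sqrt_le_1_alt; lra). lra.
    - assert (sqrt (Qn n (y2 t)) <= sqrt (Qn n (y1 Mx) + Qn n (y2 Mx))) by (apply sqrt_le_1_alt; lra). lra. }
  set (CG := rsum n (fun k => PC n rp (G k)) / rp).
  assert (HCG : 0 <= CG) by (unfold CG; apply Rmult_le_pos; [apply rsum_nonneg; intros; apply PC_nonneg; lra| left; apply Rinv_0_lt_compat; lra]).
  set (kp := Cmod (lamx x) * (KA n A + CG)).
  assert (Hg : forall t, 0 <= t <= 1 -> Qn n (vsub (y1 t) (y2 t)) <= exp (2 * kp * t) * Qn n (vsub (y1 0) (y2 0))).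
  { apply (gronwall (fun t => Qn n (vsub (y1 t) (y2 t))) (fun t => 2 * Re (cinner n (Dv y1 y2 t) (vsub (y1 t) (y2 t)))) kp).
    - intros t Ht. apply (Q_diff_deriv u u); auto.
    - intros t Ht. set (d := vsub (y1 t) (y2 t)).
      assert (Re (cinner n (Dv y1 y2 t) d) <= kp * Qn n d).
      { eapply Rle_trans. apply Rle_abs. eapply Rle_trans. apply re_le_Cmod. eapply Rle_trans. apply Cmod_cinner.
        rewrite <- vnorm_sq. pose proof (vnorm_nonneg n d).
        assert (Sn n (Dv y1 y2 t) <= kp * vnorm n d).
        { unfold Dv. eapply Rle_trans. apply Sn_lam. unfold kp. rewrite Rmult_assoc. apply Rmult_le_compat_l. apply Cmod_ge_0.
          pose proof (Sn_matvec n A d).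
          destruct (Hb t Ht) as [B1 B2].
          pose proof (G_diff n G (cpow_real x (1 - t)) (y1 t) (y2 t) rp ltac:(lra) (cpow_bound x t Hx Ht) B1 B2).
          assert (Sn n (vsub (eval_poly n G (cpow_real x (1 - t)) (y1 t)) (eval_poly n G (cpow_real x (1 - t)) (y2 t))) <= CG * vnorm n d).
          { unfold CG. apply Rmult_le_reg_l with rp; auto. eapply Rle_trans. apply H1. right. unfold d. field. lra. }
          fold d in H0, H2. rewrite Rmult_plus_distr_r. fold d. lra. }
        simpl. rewrite Rmult_1_r, <- Rmult_assoc. apply Rmult_le_compat_r; auto. }
      lra. }
  intros t Ht k Hk. specialize (Hg t Ht).
  assert (Qn n (vsub (y1 0) (y2 0)) = 0).
  { rewrite (Qn_ext n _ (fun _ => RtoC 0)). unfold Qn. rewrite (rsum_ext _ _ (fun _ => 0)) by (intros; rewrite Cmod_0; simpl; ring). apply rsum_zero.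
    intros j Hj. destruct F1 as [I1 _]. destruct F2 as [I2 _]. unfold vsub. rewrite I1, I2 by auto. Ceq. }
  rewrite H, Rmult_0_r in Hg. pose proof (Qn_nonneg n (vsub (y1 t) (y2 t))).
  assert (Qn n (vsub (y1 t) (y2 t)) = 0) by lra.
  pose proof (Qn_zero n _ H1 k Hk). unfold vsub in H2.
  replace (y1 t k) with (Cplus (Cminus (y1 t k) (y2 t k)) (y2 t k)) by Ceq. rewrite H2. Ceq. Qed.
End Main3.

Lemma sqrt_exp2 k Q : 0 <= Q -> sqrt (exp (2 * k) * Q) = exp k * sqrt Q.
Proof. intros HQ. rewrite sqrt_mult_alt by (left; apply exp_pos).
  replace (exp (2 * k)) with (exp k ^ 2) by (simpl; rewrite Rmult_1_r, <- exp_plus; f_equal; ring).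
  rewrite sqrt_pow2 by (left; apply exp_pos). auto. Qed.

Section Main4.
Variables (n : nat) (A : nat -> nat -> C) (G : polymap) (delta0 delta1 eps rho : R).
Hypotheses (HG : in_ideal_y2 n G) (Hd0 : 0 < delta0) (Hd1 : 0 < delta1) (He : 0 < eps).
Hypothesis (HA : forall y : nat -> C, vnorm n y <> 0 ->
     (- delta1 + eps) * (vnorm n y) ^ 2 < Re (cinner n (matvec n A y) y) /\
     Re (cinner n (matvec n A y) y) < (- delta0 - eps) * (vnorm n y) ^ 2).
Hypotheses (Hrho : 0 < rho) (Hrho1 : rho <= 1) (Hsmall : rho * PC1 n G <= eps).
Variables (x : C).
Hypothesis (Hx : slit_disc2 x).

Lemma energy_t u v y1 y2 t : is_flow_sol n A G x u y1 -> is_flow_sol n A G x v y2 -> 0 <= t <= 1 ->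
  vnorm n (y1 t) <= rho -> vnorm n (y2 t) <= rho ->
  Re (cinner n (Dv n A G x y1 y2 t) (vsub (y1 t) (y2 t))) <= (ln (Cmod x) * delta0 + cst n A delta1 eps) * Qn n (vsub (y1 t) (y2 t)) /\
  (ln (Cmod x) * delta1 - cst n A delta1 eps) * Qn n (vsub (y1 t) (y2 t)) <= Re (cinner n (Dv n A G x y1 y2 t) (vsub (y1 t) (y2 t))).
Proof. intros F1 F2 Ht B1 B2. unfold Dv.
  apply (energy_core n A delta0 delta1 eps Hd0 Hd1 He HA x _ _ Hx).
  eapply Rle_trans. apply Cmod_cinner.
  pose proof (G_small n G rho HG Hrho Hrho1 _ _ _ (cpow_bound x t Hx Ht) B1 B2).
  pose proof (vnorm_nonneg n (vsub (y1 t) (y2 t))). pose proof (PC1_nonneg n G).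
  rewrite <- vnorm_sq.
  eapply Rle_trans. apply Rmult_le_compat_r. auto. apply H.
  simpl. rewrite Rmult_1_r. rewrite <- Rmult_assoc. apply Rmult_le_compat_r; auto. apply Rmult_le_compat_r; auto. Qed.

Lemma lip_est u v y1 y2 : is_flow_sol n A G x u y1 -> is_flow_sol n A G x v y2 ->
  (forall t, 0 <= t <= 1 -> vnorm n (y1 t) <= rho /\ vnorm n (y2 t) <= rho) ->
  exp (- cst n A delta1 eps) * Rpower (Cmod x) delta1 * vnorm n (vsub u v) <= vnorm n (vsub (y1 1) (y2 1)) /\
  vnorm n (vsub (y1 1) (y2 1)) <= exp (cst n A delta1 eps) * Rpower (Cmod x) delta0 * vnorm n (vsub u v).
Proof. intros F1 F2 Hb.
  set (c := cst n A delta1 eps).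
  assert (E0 : Qn n (vsub (y1 0) (y2 0)) = Qn n (vsub u v)).
  { apply Qn_ext. intros k Hk. destruct F1 as [I1 _]. destruct F2 as [I2 _]. unfold vsub. rewrite I1, I2 by auto. auto. }
  assert (Up : Qn n (vsub (y1 1) (y2 1)) <= exp (2 * (ln (Cmod x) * delta0 + c) * 1) * Qn n (vsub (y1 0) (y2 0))).
  { apply (gronwall (fun t => Qn n (vsub (y1 t) (y2 t))) (fun t => 2 * Re (cinner n (Dv n A G x y1 y2 t) (vsub (y1 t) (y2 t))))).
    - intros t Ht. apply (Q_diff_deriv n A G x u v); auto.
    - intros t Ht. destruct (Hb t Ht). destruct (energy_t u v y1 y2 t F1 F2 Ht H H0). fold c in H1. lra.
    - lra. }
  assert (Lo : - Qn n (vsub (y1 1) (y2 1)) <= exp (2 * (ln (Cmod x) * delta1 - c) * 1) * - Qn n (vsub (y1 0) (y2 0))).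
  { apply (gronwall (fun t => - Qn n (vsub (y1 t) (y2 t))) (fun t => - (2 * Re (cinner n (Dv n A G x y1 y2 t) (vsub (y1 t) (y2 t)))))).
    - intros t Ht. apply (@is_derive_opp R_AbsRing R_NormedModule). apply (Q_diff_deriv n A G x u v); auto.
    - intros t Ht. destruct (Hb t Ht). destruct (energy_t u v y1 y2 t F1 F2 Ht H H0). fold c in H2. lra.
    - lra. }
  rewrite E0 in Up. assert (Lo2 : - Qn n (vsub (y1 1) (y2 1)) <= exp (2 * (ln (Cmod x) * delta1 - c) * 1) * - Qn n (vsub u v)) by (rewrite <- E0; exact Lo). clear Lo. rename Lo2 into Lo. rewrite Rmult_1_r in Up. rewrite Rmult_1_r in Lo. rewrite !vnorm_Q.
  pose proof (Qn_nonneg n (vsub u v)).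
  unfold Rpower.
  split.
  - assert (exp (2 * (ln (Cmod x) * delta1 - c)) * Qn n (vsub u v) <= Qn n (vsub (y1 1) (y2 1))) by lra.
    apply sqrt_le_1_alt in H0. rewrite sqrt_exp2 in H0 by auto.
    replace (exp (- c) * exp (delta1 * ln (Cmod x))) with (exp (ln (Cmod x) * delta1 - c)); auto.
    rewrite <- exp_plus. f_equal; ring.
  - apply sqrt_le_1_alt in Up. rewrite sqrt_exp2 in Up by auto.
    replace (exp c * exp (delta0 * ln (Cmod x))) with (exp (ln (Cmod x) * delta0 + c)); auto.
    rewrite <- exp_plus. f_equal; ring.
Qed.
End Main4.

Theorem lemma6p1 (n : nat) (A : nat -> nat -> C) (G : polymap)
  (HG : in_ideal_y2 n G) (delta0 delta1 eps : R)
  (Hd0 : 0 < delta0) (Hd1 : 0 < delta1) (He : 0 < eps)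
  (HA : forall y : nat -> C, vnorm n y <> 0 ->
     (- delta1 + eps) * (vnorm n y) ^ 2 < Re (cinner n (matvec n A y) y) /\
     Re (cinner n (matvec n A y) y) < (- delta0 - eps) * (vnorm n y) ^ 2) :
  exists r c0 c1 : R, 0 < r /\ 0 < c0 /\ 0 < c1 /\
    (forall (x : C) (u : nat -> C), slit_disc2 x -> vnorm n u < r ->
        exists y : R -> nat -> C, is_flow_sol n A G x u y) /\
    (forall (x : C) (u v : nat -> C) (yu yv : R -> nat -> C),
        slit_disc2 x -> vnorm n u < r -> vnorm n v < r ->
        is_flow_sol n A G x u yu -> is_flow_sol n A G x v yv ->
        c1 * Rpower (Cmod x) delta1 * vnorm n (vsub u v)
          <= vnorm n (vsub (yu 1) (yv 1)) /\
        vnorm n (vsub (yu 1) (yv 1))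
          <= c0 * Rpower (Cmod x) delta0 * vnorm n (vsub u v)).
Proof.
  set (P := PC1 n G). assert (HP : 0 <= P) by apply PC1_nonneg.
  set (rho := Rmin 1 (eps / (P + 1))).
  assert (Hrho : 0 < rho) by (apply Rmin_pos; [lra| apply Rdiv_lt_0_compat; lra]).
  assert (Hrho1 : rho <= 1) by apply Rmin_l.
  assert (Hsmall : rho * P <= eps).
  { assert (rho <= eps / (P + 1)) by apply Rmin_r.
    assert (rho * P <= eps / (P + 1) * P) by (apply Rmult_le_compat_r; auto).
    assert (eps / (P + 1) * P <= eps).
    { apply Rmult_le_reg_r with (P + 1). lra. replace (eps / (P + 1) * P * (P + 1)) with (eps * P) by (field; lra). nra. }
    lra. }
  exists (rr n A delta0 delta1 eps rho), (exp (cst n A delta1 eps)), (exp (- cst n A delta1 eps)).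
  split. { unfold rr. apply Rdiv_lt_0_compat; auto. pose proof (pos_INR n). pose proof (exp_pos (kap n A delta0 delta1 eps)). nra. }
  split. apply exp_pos. split. apply exp_pos. split.
  - intros x u Hx Hu. exists (zlim n A G x rho u).
    apply (z_flow n A G delta0 delta1 eps rho HG Hd0 Hd1 He HA Hrho Hrho1 Hsmall x u Hx Hu).
  - intros x u v yu yv Hx Hu Hv Fu Fv.
    pose proof (z_flow n A G delta0 delta1 eps rho HG Hd0 Hd1 He HA Hrho Hrho1 Hsmall x u Hx Hu) as Zu.
    pose proof (z_flow n A G delta0 delta1 eps rho HG Hd0 Hd1 He HA Hrho Hrho1 Hsmall x v Hx Hv) as Zv.
    apply (lip_est n A G delta0 delta1 eps rho); auto.
    intros t Ht. split.
    + rewrite (vnorm_ext n (yu t) (zlim n A G x rho u t)) by (intros; apply (uniqueness n A G x Hx u); auto).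
      eapply Rle_trans. apply vnorm_le_Sn. apply (z_in n A G delta0 delta1 eps rho HG Hd0 Hd1 He HA Hrho Hrho1 Hsmall x u Hx Hu t Ht).
    + rewrite (vnorm_ext n (yv t) (zlim n A G x rho v t)) by (intros; apply (uniqueness n A G x Hx v); auto).
      eapply Rle_trans. apply vnorm_le_Sn. apply (z_in n A G delta0 delta1 eps rho HG Hd0 Hd1 He HA Hrho Hrho1 Hsmall x v Hx Hv t Ht).
Qed.
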